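(* Let $\kappa$ be a regular cardinal. If $X\subseteq\kappa^\kappa$ is $\kappa$-$\Delta^1_1$, then $X$ is $(\kappa,\kappa^{<\kappa})$-Borel$^*$.
   Context: Basic $\kappa$-open sets: $N_\eta=\{\zeta\in\kappa^\kappa\mid\eta\subseteq\zeta\}$ for $\eta:X\to\kappa$, $X\subseteq\kappa$, $|X|<\kappa$, and $\emptyset$; in $\kappa^\kappa\times\kappa^\kappa$ they are products $N_\eta\times N_\xi$. A set is $\kappa$-open if it is a union of at most $\kappa$ basic $\kappa$-open sets, $\kappa$-closed if its complement is $\kappa$-open; $\kappa$-Borel sets form the smallest class containing the basic $\kappa$-open sets closed under complements and unions and intersections of at most $\kappa$ sets. $A\subseteq\kappa^\kappa$ is $\kappa$-$\Sigma^1_1$ if it is the projection onto the first coordinate of a $\kappa$-Borel subset of $\kappa^\kappa\times\kappa^\kappa$, $\kappa$-$\Pi^1_1$ if its complement is $\kappa$-$\Sigma^1_1$, and $\kappa$-$\Delta^1_1$ if both. A good labelled $(\kappa,\lambda)$-tree is a pair $(T,L)$ where $T$ is a (rooted) tree without branches of length $\kappa$, every element has at most $\kappa$ immediate successors, $|T|\le\lambda$, every increasing sequence in $T$ has a supremum in $T$, $L(t)\in\{\bigcup,\bigcap\}$ for non-leaves $t$, and $L(t)$ is a basic $\kappa$-open set for leaves $t$ (the paper also allows $\kappa$-Borel sets as leaf labels). Borel$^*$-game $GB(\xi,(T,L))$: the play starts at the root; at a non-leaf $t$, II chooses an immediate successor if $L(t)=\bigcup$, I chooses if $L(t)=\bigcap$;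 at limits the play moves to the supremum; the play ends at a leaf $t$ and II wins iff $\xi\in L(t)$. $(T,L)$ is a $(\kappa,\lambda)$-Borel$^*$-code if it is a good labelled $(\kappa,\lambda)$-tree and there is $\pi$ with: (i) $\mathrm{dom}(\pi)$ a $\kappa$-closed subset of $\kappa^\kappa$ and each $\pi(\eta)$ a strategy of II; (ii) whenever II has a winning strategy in $GB(\xi,(T,L))$, some $\pi(\eta)$ is one; (iii) $\{(\xi,\eta)\mid\eta\in\mathrm{dom}(\pi),\ \pi(\eta)$ winning for II in $GB(\xi,(T,L))\}$ is $\kappa$-Borel. $X\subseteq\kappa^\kappa$ is $(\kappa,\lambda)$-Borel$^*$ if there is a $(\kappa,\lambda)$-Borel$^*$-code $(T,L)$ with $\xi\in X\iff$ II has a winning strategy in $GB(\xi,(T,L))$, for all $\xi$. *)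

(* Defs.v *)
Set Implicit Arguments.

Definition injective {A B : Type} (f : A -> B) : Prop :=
  forall x y, f x = f y -> x = y.
Definition card_le (A B : Type) : Prop := exists f : A -> B, injective f.
Definition card_lt (A B : Type) : Prop := card_le A B /\ ~ card_le B A.

(** kappa is represented by a type K with a strict well-order lt (the
    ordinals below kappa).  It is a regular (infinite) cardinal. *)
Definition regular_cardinal (K : Type) (lt : K -> K -> Prop) : Prop :=
  well_founded lt /\
  (forall a b c, lt a b -> lt b c -> lt a c) /\
  (forall a b, lt a b \/ a = b \/ lt b a) /\
  (* initial ordinal: no injection of kappa into a proper initial segment *)
  (forall a : K, ~ card_le K {b : K | lt b a}) /\
  (exists f : nat -> K, injective f) /\
  (forall S : K -> Prop, card_lt {x : K | S x} K -> exists b, forall x, S x -> lt x b).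

Section GDST.
Context {K : Type} (lt : K -> K -> Prop).

Definition Baire : Type := K -> K.

(** kappa^{<kappa} = the set of functions from some alpha < kappa to kappa *)
Definition KltK : Type := {a : K & {b : K | lt b a} -> K}.

(** Basic kappa-open sets N_eta (|dom eta| < kappa), and the empty set. *)
Definition basic1 (U : Baire -> Prop) : Prop :=
  (forall z, ~ U z) \/
  exists (X : K -> Prop) (eta : {x : K | X x} -> K),
    card_lt {x : K | X x} K /\
    forall z : Baire, U z <-> (forall x : {x : K | X x}, z (proj1_sig x) = eta x).

Definition basic2 (W : Baire * Baire -> Prop) : Prop :=
  exists U V, basic1 U /\ basic1 V /\ forall p, W p <-> (U (fst p) /\ V (snd p)).

Inductive kBorel {S : Type} (basic : (S -> Prop) -> Prop) : (S -> Prop) -> Prop :=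
| kB_basic U : basic U -> kBorel basic U
| kB_compl U : kBorel basic U -> kBorel basic (fun x => ~ U x)
| kB_union (I : Type) (F : I -> S -> Prop) :
    card_le I K -> (forall i, kBorel basic (F i)) ->
    kBorel basic (fun x => exists i, F i x)
| kB_inter (I : Type) (F : I -> S -> Prop) :
    card_le I K -> (forall i, kBorel basic (F i)) ->
    kBorel basic (fun x => forall i, F i x)
| kB_ext U V : kBorel basic U -> (forall x, U x <-> V x) -> kBorel basic V.

Definition kopen1 (U : Baire -> Prop) : Prop :=
  exists (I : Type) (F : I -> Baire -> Prop),
    card_le I K /\ (forall i, basic1 (F i)) /\
    forall z, U z <-> exists i, F i z.
Definition kclosed1 (C : Baire -> Prop) : Prop := kopen1 (fun z => ~ C z).

Definition Sigma11 (A : Baire -> Prop) : Prop :=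
  exists B : Baire * Baire -> Prop,
    kBorel basic2 B /\ forall x, A x <-> exists y, B (x, y).
Definition Pi11 (A : Baire -> Prop) : Prop := Sigma11 (fun x => ~ A x).
Definition Delta11 (A : Baire -> Prop) : Prop := Sigma11 A /\ Pi11 A.

Inductive label : Type :=
| LUnion : label
| LInter : label
| LLeaf : (Baire -> Prop) -> label.

Section Tree.
Context {N : Type} (tlt : N -> N -> Prop) (root : N) (L : N -> label).

Definition tle (s t : N) : Prop := s = t \/ tlt s t.
Definition leaf (t : N) : Prop := ~ exists s, tlt t s.
Definition imm_succ (t s : N) : Prop := tlt t s /\ ~ exists u, tlt t u /\ tlt u s.

(** good labelled (kappa,lambda)-tree, lambda given as a type Lam *)
Definition good_tree (Lam : Type) : Prop :=
  (forall t, ~ tlt t t) /\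
  (forall a b c, tlt a b -> tlt b c -> tlt a c) /\
  (forall t, tle root t) /\
  (forall t a b, tlt a t -> tlt b t -> tlt a b \/ a = b \/ tlt b a) /\
  well_founded tlt /\
  (~ exists f : K -> N, forall a b, lt a b -> tlt (f a) (f b)) /\
  (forall t, card_le {s : N | imm_succ t s} K) /\
  card_le N Lam /\
  (forall (a : K) (f : {b : K | lt b a} -> N),
      (forall x y, lt (proj1_sig x) (proj1_sig y) -> tlt (f x) (f y)) ->
      exists s, (forall x, tle (f x) s) /\
                (forall u, (forall x, tle (f x) u) -> tle s u)) /\
  (forall t, ~ leaf t -> L t = LUnion \/ L t = LInter) /\
  (forall t, leaf t -> exists U, L t = LLeaf U /\ basic1 U).

(** Positions of the game are
    nodes of T (the history of a play is determined by the current node),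
    so a strategy of II assigns to each node labelled Union an immediate
    successor. *)
Definition strategyII (sigma : N -> N) : Prop :=
  forall t, L t = LUnion -> imm_succ t (sigma t).

Definition consistent (sigma : N -> N) (t : N) : Prop :=
  forall s, tlt s t -> L s = LUnion -> tle (sigma s) t.

Definition leaf_holds (xi : Baire) (l : label) : Prop :=
  match l with LLeaf U => U xi | _ => False end.

Definition winningII (xi : Baire) (sigma : N -> N) : Prop :=
  strategyII sigma /\
  forall t, leaf t -> consistent sigma t -> leaf_holds xi (L t).

Definition II_wins (xi : Baire) : Prop := exists sigma, winningII xi sigma.

Definition borel_star_code (Lam : Type) : Prop :=
  good_tree Lam /\
  exists (D : Baire -> Prop) (pi : Baire -> N -> N),
    kclosed1 D /\
    (forall eta, D eta -> strategyII (pi eta)) /\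
    (forall xi, II_wins xi -> exists eta, D eta /\ winningII xi (pi eta)) /\
    kBorel basic2 (fun p => D (snd p) /\ winningII (fst p) (pi (snd p))).

End Tree.

Definition borel_star (Lam : Type) (X : Baire -> Prop) : Prop :=
  exists (N : Type) (tlt : N -> N -> Prop) (root : N) (L : N -> label),
    borel_star_code tlt root L Lam /\
    forall xi, X xi <-> II_wins tlt L xi.

End GDST.

(* Main.v *)
Require Import Defs.
From Stdlib Require Import Classical ClassicalEpsilon FunctionalExtensionality PropExtensionality ProofIrrelevance Eqdep Lia.
From Stdlib Require Import Wellfounded.


Lemma sig_eq_ (A : Type) (P : A -> Prop) (x y : sig P) : proj1_sig x = proj1_sig y -> x = y.
Proof. destruct x as [x hx], y as [y hy]; simpl; intros E; subst; f_equal; apply proof_irrelevance. Qed.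

Definition dec (P : Prop) : bool := if excluded_middle_informative P then true else false.
Lemma dec_true (P : Prop) : P -> dec P = true.
Proof. unfold dec; destruct (excluded_middle_informative P); tauto. Qed.
Lemma dec_false (P : Prop) : ~ P -> dec P = false.
Proof. unfold dec; destruct (excluded_middle_informative P); tauto. Qed.

Section Card.
Context {K : Type} {lt : K -> K -> Prop} (Hreg : regular_cardinal lt).

Lemma lt_wf : well_founded lt. Proof. destruct Hreg as (?&?&?&?&?&?); auto. Qed.
Lemma lt_trans a b c : lt a b -> lt b c -> lt a c. Proof. destruct Hreg as (?&?&?&?&?&?); eauto. Qed.
Lemma lt_trich a b : lt a b \/ a = b \/ lt b a. Proof. destruct Hreg as (?&?&?&?&?&?); eauto. Qed.
Lemma lt_init a : ~ card_le K {b | lt b a}. Proof. destruct Hreg as (?&?&?&?&?&?); eauto. Qed.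
Lemma lt_inf : exists f : nat -> K, injective f. Proof. destruct Hreg as (?&?&?&?&?&?); eauto. Qed.
Lemma lt_reg S : card_lt {x | S x} K -> exists b, forall x, S x -> lt x b.
Proof. destruct Hreg as (?&?&?&?&?&?); eauto. Qed.

Lemma lt_irrefl a : ~ lt a a.
Proof. induction a as [a IH] using (well_founded_ind lt_wf). intros H; exact (IH a H H). Qed.
Lemma lt_asym a b : lt a b -> lt b a -> False.
Proof. intros H1 H2; exact (lt_irrefl _ (lt_trans _ _ _ H1 H2)). Qed.

Definition fnat : nat -> K := proj1_sig (constructive_indefinite_description _ lt_inf).
Lemma fnat_inj : injective fnat.
Proof. unfold fnat; destruct (constructive_indefinite_description _ lt_inf); auto. Qed.
Definition kz : K := fnat 0.
Lemma K_inh : inhabited K. Proof. exact (inhabits kz). Qed.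
Lemma fnat_neq i j : i <> j -> fnat i <> fnat j.
Proof. intros H E; apply H, fnat_inj, E. Qed.

Definition le x y := lt x y \/ x = y.
Lemma le_lt_trans a b c : le a b -> lt b c -> lt a c.
Proof. intros [H|H] H'; [eapply lt_trans; eauto | subst; auto]. Qed.
Lemma lt_le_trans a b c : lt a b -> le b c -> lt a c.
Proof. intros H [H'|H']; [eapply lt_trans; eauto | subst; auto]. Qed.
Lemma le_trans a b c : le a b -> le b c -> le a c.
Proof. intros [H|H] [H'|H']; subst; unfold le; eauto using lt_trans. Qed.
Lemma not_lt_le a b : ~ lt a b -> le b a.
Proof. intros H; destruct (lt_trich a b) as [?|[?|?]]; unfold le; [tauto|subst; auto|auto]. Qed.
Lemma le_not_lt a b : le a b -> ~ lt b a.
Proof. intros [H|H] H'; subst; [eapply lt_asym; eauto | eapply lt_irrefl; eauto]. Qed.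

Definition small (S : K -> Prop) := exists b, forall x, S x -> lt x b.

Lemma proj_inj (S : K -> Prop) : injective (@proj1_sig K S).
Proof. intros x y E; apply sig_eq_, E. Qed.

Lemma small_inj (A : Type) (S : K -> Prop) (g : {x | S x} -> A) :
  injective g -> ~ card_le K A -> small S.
Proof.
  intros gi nA. apply lt_reg. split.
  - exists (@proj1_sig _ _); apply proj_inj.
  - intros [h hi]. apply nA. exists (fun k => g (h k)). intros x y E. apply hi, gi, E.
Qed.

Lemma small_notbig S : small S -> ~ card_le K {x | S x}.
Proof.
  intros [b Hb] [h hi]; apply (lt_init b).
  exists (fun k => exist (fun c => lt c b) (proj1_sig (h k)) (Hb _ (proj2_sig (h k)))).
  intros x y E. apply hi. apply sig_eq_. exact (f_equal (@proj1_sig _ _) E).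
Qed.

Lemma small_sub (S T : K -> Prop) : small T -> (forall x, S x -> T x) -> small S.
Proof. intros [b Hb] H; exists b; auto. Qed.

Lemma sq_notbig a : ~ card_le K ({b | lt b a} * {b | lt b a}).
Proof.
  intros [F Fi].
  assert (HA : forall c : {b | lt b a}, small (fun k => fst (F k) = c)).
  { intros c. apply (small_inj {b | lt b a} _ (fun k : {k | fst (F k) = c} => snd (F (proj1_sig k)))).
    - intros [k1 h1] [k2 h2] E; simpl in *. apply sig_eq_; simpl. apply Fi.
      destruct (F k1), (F k2); simpl in *; subst; reflexivity.
    - apply lt_init. }
  set (bnd := fun c => proj1_sig (constructive_indefinite_description _ (HA c))).
  assert (Hbnd : forall c k, fst (F k) = c -> lt k (bnd c)).
  { intros c k; unfold bnd; destruct (constructive_indefinite_description _ (HA c)); simpl; auto. }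
  assert (HS : small (fun k => exists c, k = bnd c)).
  { apply (small_inj {b | lt b a} _
      (fun k : {k | exists c, k = bnd c} => proj1_sig (constructive_indefinite_description _ (proj2_sig k)))).
    - intros [k1 h1] [k2 h2] E; simpl in *. apply sig_eq_; simpl.
      destruct (constructive_indefinite_description _ h1) as [c1 e1];
      destruct (constructive_indefinite_description _ h2) as [c2 e2]; simpl in *; subst; auto.
    - apply lt_init. }
  destruct HS as [B HB].
  assert (H1 : lt B (bnd (fst (F B)))) by (apply Hbnd; reflexivity).
  assert (H2 : lt (bnd (fst (F B))) B) by (apply HB; eauto).
  eapply lt_asym; eauto.
Qed.

Lemma exists_gt a : exists b, lt a b.
Proof.
  assert (H : small (fun x => x = a)).
  { apply (small_inj unit _ (fun _ => tt)).
    - intros [x hx] [y hy] _; apply sig_eq_; simpl; congruence.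
    - intros [h hi]. apply (fnat_neq 0 1); auto. apply hi; destruct (h (fnat 0)), (h (fnat 1)); auto. }
  destruct H as [b Hb]; exists b; auto.
Qed.

Lemma least_ex (P : K -> Prop) : (exists x, P x) -> exists x, P x /\ forall y, P y -> le x y.
Proof.
  intros [x Px]. apply NNPP; intros Hn.
  assert (Hz : forall z, ~ P z).
  { intros z; induction z as [z IH] using (well_founded_ind lt_wf). intros Pz.
    apply Hn. exists z; split; auto. intros y Py. apply not_lt_le. intros Hyz.
    exact (IH y Hyz Py). }
  exact (Hz x Px).
Qed.

Lemma small_bound2 S T : small S -> small T -> small (fun x => S x \/ T x).
Proof.
  intros [a Ha] [b Hb]. destruct (lt_trich a b) as [H|[H|H]].
  - exists b; intros x [Hx|Hx]; eauto using lt_trans.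
  - subst; exists b; intros x [Hx|Hx]; eauto.
  - exists a; intros x [Hx|Hx]; eauto using lt_trans.
Qed.

Lemma small_single a : small (fun x => x = a).
Proof. destruct (exists_gt a) as [b Hb]; exists b; intros; subst; auto. Qed.

Definition mx (p : K * K) : K := if excluded_middle_informative (lt (fst p) (snd p)) then snd p else fst p.
Lemma mx_fst p : le (fst p) (mx p).
Proof. unfold mx; destruct (excluded_middle_informative _); unfold le; auto. Qed.
Lemma mx_snd p : le (snd p) (mx p).
Proof. unfold mx; destruct (excluded_middle_informative _); unfold le; auto. apply not_lt_le; auto. Qed.

Definition GR (q p : K * K) : Prop :=
  lt (mx q) (mx p) \/ (mx q = mx p /\ (lt (fst q) (fst p) \/ (fst q = fst p /\ lt (snd q) (snd p)))).

Lemma GR_wf : well_founded GR.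
Proof.
  assert (forall m p, mx p = m -> Acc GR p).
  { intros m; induction m as [m IHm] using (well_founded_ind lt_wf).
    intros [a b]. revert b. induction a as [a IHa] using (well_founded_ind lt_wf).
    intros b. induction b as [b IHb] using (well_founded_ind lt_wf).
    intros E. constructor. intros [c d] Hq. unfold GR in Hq; simpl in Hq.
    destruct Hq as [H1|[H2 [H3|[H4 H5]]]].
    - apply (IHm (mx (c,d))); auto. rewrite <- E; auto.
    - apply IHa; auto. congruence.
    - subst c. apply IHb; auto. congruence. }
  intros p; eauto.
Qed.

Lemma GR_total p q : p <> q -> GR p q \/ GR q p.
Proof.
  intros Hne. unfold GR. destruct (lt_trich (mx p) (mx q)) as [H|[H|H]]; [tauto| |tauto].
  destruct (lt_trich (fst p) (fst q)) as [H'|[H'|H']]; [tauto| |right; right; split; [symmetry; exact H| tauto]].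
  destruct (lt_trich (snd p) (snd q)) as [H''|[H''|H'']]; [tauto| |right; right; split; [symmetry; exact H| right; split; [symmetry; exact H'| exact H'']]].
  exfalso; apply Hne; destruct p, q; simpl in *; congruence.
Qed.

Definition gF (p : K * K) (rec : forall q, GR q p -> K) : K :=
  epsilon K_inh (fun k => forall q (Hq : GR q p), rec q Hq <> k).

Definition gpair : K * K -> K := Fix GR_wf (fun _ => K) gF.

Lemma gpair_eq p : gpair p = gF p (fun q _ => gpair q).
Proof.
  unfold gpair. refine (Fix_eq GR_wf (fun _ => K) gF _ p). intros x f g Hfg. unfold gF. f_equal.
  apply functional_extensionality; intro k. apply propositional_extensionality.
  split; intros H q Hq; [rewrite <- Hfg | rewrite Hfg]; auto.
Qed.

Lemma gpair_spec p : forall q, GR q p -> gpair q <> gpair p.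
Proof.
  rewrite (gpair_eq p). unfold gF.
  apply (epsilon_spec K_inh (fun k => forall q (Hq : GR q p), gpair q <> k)).
  apply NNPP; intros Hn.
  assert (Hall : forall k, exists q, GR q p /\ gpair q = k).
  { intros k. apply NNPP; intros Hk. apply Hn. exists k. intros q Hq E. apply Hk; eauto. }
  destruct (exists_gt (mx p)) as [b Hb].
  apply (sq_notbig b).
  set (ch := fun k => proj1_sig (constructive_indefinite_description _ (Hall k))).
  assert (Hch : forall k, GR (ch k) p /\ gpair (ch k) = k).
  { intros k; unfold ch; destruct (constructive_indefinite_description _ (Hall k)); auto. }
  assert (Hmx : forall k, le (mx (ch k)) (mx p)).
  { intros k. destruct (Hch k) as [[H|[H _]] _]; unfold le; auto. }
  assert (B1 : forall k, lt (fst (ch k)) b).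
  { intros k. eapply le_lt_trans; [eapply le_trans; [apply mx_fst | apply Hmx] | exact Hb]. }
  assert (B2 : forall k, lt (snd (ch k)) b).
  { intros k. eapply le_lt_trans; [eapply le_trans; [apply mx_snd | apply Hmx] | exact Hb]. }
  exists (fun k => (exist (fun c => lt c b) (fst (ch k)) (B1 k), exist (fun c => lt c b) (snd (ch k)) (B2 k))).
  intros k1 k2 E. injection E; intros E2 E1. clear E.
  rewrite <- (proj2 (Hch k1)), <- (proj2 (Hch k2)). f_equal.
  revert E1 E2. generalize (ch k1) (ch k2). intros [] []; simpl; congruence.
Qed.

Definition pr (a b : K) : K := gpair (a, b).
Lemma pr_inj a b c d : pr a b = pr c d -> a = c /\ b = d.
Proof.
  intros E. destruct (classic ((a,b) = (c,d))) as [H|H].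
  - injection H; auto.
  - exfalso. destruct (GR_total _ _ H) as [G|G].
    + apply (gpair_spec _ _ G); exact E.
    + apply (gpair_spec _ _ G); symmetry; exact E.
Qed.

Lemma card_le_K : card_le K K. Proof. exists (fun x => x); intros x y; auto. Qed.
Lemma card_le_trans A B C : card_le A B -> card_le B C -> card_le A C.
Proof. intros [f fi] [g gi]; exists (fun x => g (f x)); intros x y E; auto. Qed.
Lemma card_le_sig_sub A (P : A -> Prop) : card_le A K -> card_le {x | P x} K.
Proof. intros [f fi]; exists (fun x => f (proj1_sig x)); intros x y E; apply sig_eq_; auto. Qed.
Lemma card_le_prod A B : card_le A K -> card_le B K -> card_le (A * B) K.
Proof.
  intros [f fi] [g gi]; exists (fun p => pr (f (fst p)) (g (snd p))).
  intros [a b] [c d] E; simpl in E; apply pr_inj in E; destruct E; f_equal; auto.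
Qed.
Lemma card_le_sigT (I : Type) (J : I -> Type) :
  card_le I K -> (forall i, card_le (J i) K) -> card_le {i : I & J i} K.
Proof.
  intros [f fi] HJ.
  set (g := fun i => proj1_sig (constructive_indefinite_description _ (HJ i))).
  assert (gi : forall i, injective (g i)).
  { intros i; unfold g; destruct (constructive_indefinite_description _ (HJ i)); auto. }
  exists (fun p => pr (f (projT1 p)) (g (projT1 p) (projT2 p))).
  intros [i x] [j y] E; simpl in E. apply pr_inj in E. destruct E as [E1 E2].
  apply fi in E1. subst j. apply gi in E2. subst; auto.
Qed.
Lemma card_le_sum A B : card_le A K -> card_le B K -> card_le (A + B) K.
Proof.
  intros [f fi] [g gi]. exists (fun s => match s with inl a => pr kz (f a) | inr b => pr (fnat 1) (g b) end).
  intros [a|b] [c|d] E; apply pr_inj in E; destruct E as [E1 E2]; try (f_equal; auto);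
  exfalso; apply (fnat_neq 0 1); auto; unfold kz in *; congruence.
Qed.
Lemma card_le_unit : card_le unit K. Proof. exists (fun _ => kz); intros [] [] _; auto. Qed.
Lemma card_le_bool : card_le bool K.
Proof. exists (fun b : bool => if b then kz else fnat 1); intros [|] [|] E; auto; exfalso;
  apply (fnat_neq 0 1); auto; unfold kz in *; congruence. Qed.
Lemma card_le_False : card_le False K. Proof. exists (fun x : False => match x return K with end); intros []. Qed.

End Card.
Arguments small {K} lt S.
Arguments le {K} lt x y.
Arguments GR {K} lt q p.



Section Basic.
Context {K : Type} {lt : K -> K -> Prop} (Hreg : regular_cardinal lt).

Notation small := (small lt).
Notation kz := (kz Hreg).
Notation pr := (pr Hreg).

Lemma card_lt_small (X : K -> Prop) : small X -> card_lt {x | X x} K.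
Proof. intros H; split; [exists (@proj1_sig _ _); apply proj_inj | apply (small_notbig Hreg); auto]. Qed.

Lemma basic1_ext (U V : @Baire K -> Prop) : basic1 U -> (forall z, U z <-> V z) -> basic1 V.
Proof.
  intros [H|(X&eta&H1&H2)] E; [left; intros z Hz; apply (H z), E, Hz|].
  right; exists X, eta; split; auto. intros z; rewrite <- E; auto.
Qed.

Lemma basic1_mk (X : K -> Prop) (e : K -> K) : small X -> basic1 (fun z : @Baire K => forall x, X x -> z x = e x).
Proof.
  intros Hs; right; exists X, (fun x => e (proj1_sig x)); split; [apply card_lt_small; auto|].
  intros z; split; intros H; [intros [x hx]; apply H; auto | intros x hx; apply (H (exist _ x hx))].
Qed.

Lemma basic1_empty : basic1 (fun _ : @Baire K => False).
Proof. left; auto. Qed.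

Lemma small_empty : small (fun _ => False).
Proof. exists kz; intros _ []. Qed.

Lemma basic1_full : basic1 (fun _ : @Baire K => True).
Proof.
  eapply basic1_ext; [apply (basic1_mk (fun _ => False) (fun x => x) small_empty)|].
  intros z; split; auto. intros _ _ [].
Qed.

Lemma basic1_single a v : basic1 (fun z : @Baire K => z a = v).
Proof.
  eapply basic1_ext; [apply (basic1_mk (fun x => x = a) (fun _ => v) (small_single Hreg a))|].
  intros z; split; intros H; [apply H; auto | intros x ->; auto].
Qed.

Lemma basic1_dest (U : @Baire K -> Prop) : basic1 U ->
  (forall z, ~ U z) \/ exists X e, small X /\ forall z, U z <-> (forall x, X x -> z x = e x).
Proof.
  intros [H|(X&eta&H1&H2)]; [left; auto|right].
  exists X, (fun x => match excluded_middle_informative (X x) with left h => eta (exist _ x h) | right _ => x end).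
  split; [apply (lt_reg Hreg); auto|].
  intros z; rewrite H2; split; intros H x.
  - intros hx; destruct (excluded_middle_informative (X x)) as [h|h]; [|tauto].
    exact (H (exist _ x h)).
  - destruct x as [x hx]; simpl. rewrite (H x hx).
    destruct (excluded_middle_informative (X x)) as [h|h]; [|tauto]. f_equal; apply sig_eq_; auto.
Qed.

Lemma basic1_det (U : @Baire K -> Prop) : basic1 U ->
  (forall z, ~ U z) \/ exists b, forall z z', (forall x, lt x b -> z x = z' x) -> U z -> U z'.
Proof.
  intros HU; destruct (basic1_dest _ HU) as [H|(X&e&[b Hb]&H)]; [left; auto|right].
  exists b; intros z z' E Hz. rewrite H in *. intros x hx. rewrite <- E; auto.
Qed.

Lemma basic1_inter (U V : @Baire K -> Prop) : basic1 U -> basic1 V -> basic1 (fun z => U z /\ V z).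
Proof.
  intros HU HV. destruct (basic1_dest _ HU) as [H|(X&e&Hs&H)]; [left; intros z [Hz _]; eapply H; eauto|].
  destruct (basic1_dest _ HV) as [H'|(X'&e'&Hs'&H')]; [left; intros z [_ Hz]; eapply H'; eauto|].
  destruct (classic (exists x, X x /\ X' x /\ e x <> e' x)) as [(x&h1&h2&h3)|Hc].
  - left. intros z [Hz Hz']. rewrite H in Hz; rewrite H' in Hz'. apply h3. rewrite <- Hz, <- Hz'; auto.
  - eapply basic1_ext; [apply (basic1_mk (fun x => X x \/ X' x)
       (fun x => if excluded_middle_informative (X x) then e x else e' x) (small_bound2 Hreg _ _ Hs Hs'))|].
    intros z; rewrite H, H'. split.
    + intros Hz; split.
      * intros x hx. specialize (Hz x (or_introl hx)). destruct (excluded_middle_informative (X x)); [auto|tauto].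
      * intros x hx. specialize (Hz x (or_intror hx)). destruct (excluded_middle_informative (X x)) as [h|h]; auto.
        rewrite Hz. apply NNPP; intros n; apply Hc; eauto.
    + intros [Hz Hz'] x hx; destruct (excluded_middle_informative (X x)) as [h|h]; [apply Hz; auto|apply Hz'; tauto].
Qed.

Lemma basic1_pull (h : K -> K) (U : @Baire K -> Prop) : injective h -> basic1 U ->
  basic1 (fun z => U (fun x => z (h x))).
Proof.
  intros hi HU. destruct (basic1_dest _ HU) as [H|(X&e&Hs&H)]; [left; intros z; apply H|].
  set (hinv := fun y => epsilon (K_inh Hreg) (fun x => h x = y)).
  assert (Hinv : forall x, hinv (h x) = x).
  { intros x; unfold hinv. apply hi. apply (epsilon_spec (K_inh Hreg) (fun x' => h x' = h x)); eauto. }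
  assert (Hs2 : small (fun y => exists x, X x /\ y = h x)).
  { assert (L : forall y, (exists x, X x /\ y = h x) -> X (hinv y)).
    { intros y [x [hx ->]]. rewrite Hinv; auto. }
    apply (small_inj Hreg {x | X x} (fun y => exists x, X x /\ y = h x)
       (fun y => exist X (hinv (proj1_sig y)) (L (proj1_sig y) (proj2_sig y)))).
    - intros [y1 [x1 [h1 e1]]] [y2 [x2 [h2 e2]]] E. apply sig_eq_; simpl in *.
      apply (f_equal (@proj1_sig _ _)) in E; simpl in E. subst. rewrite !Hinv in E. congruence.
    - apply (small_notbig Hreg); auto. }
  eapply basic1_ext; [apply (basic1_mk _ (fun y => e (hinv y)) Hs2)|].
  intros z; rewrite H; split.
  - intros Hz x hx. specialize (Hz (h x) (ex_intro _ x (conj hx eq_refl))). rewrite Hinv in Hz; auto.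
  - intros Hz y [x [hx ->]]. rewrite Hinv; auto.
Qed.

Lemma basic1_complK (U : @Baire K -> Prop) : basic1 U ->
  exists F : K -> (@Baire K -> Prop), (forall k, basic1 (F k)) /\ forall z, ~ U z <-> exists k, F k z.
Proof.
  intros HU. destruct (basic1_dest _ HU) as [H|(X&e&Hs&H)].
  - exists (fun _ _ => True); split; [intros; apply basic1_full|]. intros z; split; [exists kz; auto|intros _; apply H].
  - exists (fun k z => exists x v, k = pr x v /\ X x /\ v <> e x /\ z x = v). split.
    + intros k. destruct (classic (exists x v, k = pr x v /\ X x /\ v <> e x)) as [(x&v&E&h1&h2)|Hc].
      * eapply basic1_ext; [apply (basic1_single x v)|]. intros z; split.
        -- intros Hz; exists x, v; auto.
        -- intros (x'&v'&E'&h1'&h2'&h3'). subst k. apply pr_inj in E'. destruct E'; subst; auto.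
      * eapply basic1_ext; [apply basic1_empty|]. intros z; split; [intros []|].
        intros (x&v&E&h1&h2&h3); apply Hc; eauto.
    + intros z; rewrite H; split.
      * intros Hz. apply NNPP; intros Hn. apply Hz. intros x hx. apply NNPP; intros ne.
        apply Hn. exists (pr x (z x)), x, (z x); auto.
      * intros (k&x&v&E&h1&h2&h3) Hz. apply h2. rewrite <- h3; auto.
Qed.

Definition basic3 (F : @Baire K -> @Baire K -> @Baire K -> Prop) : Prop :=
  exists U V W, basic1 U /\ basic1 V /\ basic1 W /\ forall a b c, F a b c <-> U a /\ V b /\ W c.
Definition ounion3 (O : @Baire K -> @Baire K -> @Baire K -> Prop) : Prop :=
  exists F : K -> (@Baire K -> @Baire K -> @Baire K -> Prop), (forall k, basic3 (F k)) /\
    forall a b c, O a b c <-> exists k, F k a b c.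
Definition closed3 (C : @Baire K -> @Baire K -> @Baire K -> Prop) : Prop := ounion3 (fun a b c => ~ C a b c).

Lemma basic3_ext F G : basic3 F -> (forall a b c, F a b c <-> G a b c) -> basic3 G.
Proof. intros (U&V&W&h1&h2&h3&h4) E; exists U, V, W; split; [|split; [|split]]; auto.
  intros a b c; rewrite <- E; apply h4. Qed.

Lemma basic3_empty : basic3 (fun _ _ _ => False).
Proof. exists (fun _ => False), (fun _ => True), (fun _ => True); repeat split; auto using basic1_empty, basic1_full; tauto. Qed.
Lemma basic3_full : basic3 (fun _ _ _ => True).
Proof. exists (fun _ => True), (fun _ => True), (fun _ => True); repeat split; auto using basic1_full. Qed.

Lemma basic3_inter F G : basic3 F -> basic3 G -> basic3 (fun a b c => F a b c /\ G a b c).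
Proof.
  intros (U&V&W&h1&h2&h3&h4) (U'&V'&W'&h1'&h2'&h3'&h4').
  exists (fun z => U z /\ U' z), (fun z => V z /\ V' z), (fun z => W z /\ W' z).
  repeat split; auto using basic1_inter; intros; rewrite ?h4, ?h4' in *; tauto.
Qed.

Lemma ou_ext O O' : ounion3 O -> (forall a b c, O a b c <-> O' a b c) -> ounion3 O'.
Proof. intros (F&h1&h2) E; exists F; split; auto; intros; rewrite <- E; auto. Qed.

Lemma ou_basic F : basic3 F -> ounion3 F.
Proof. intros H; exists (fun _ => F); split; auto. intros; split; [exists kz; auto|intros [_ ?]; auto]. Qed.

Lemma ou_empty : ounion3 (fun _ _ _ => False).
Proof. exists (fun _ _ _ _ => False); split; [intros; apply basic3_empty|]. intros; split; [intros []|intros [_ []]]. Qed.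

Lemma ou_unionK (O : K -> (@Baire K -> @Baire K -> @Baire K -> Prop)) :
  (forall k, ounion3 (O k)) -> ounion3 (fun a b c => exists k, O k a b c).
Proof.
  intros H.
  set (F := fun k => proj1_sig (constructive_indefinite_description _ (H k))).
  assert (HF : forall k, (forall j, basic3 (F k j)) /\ forall a b c, O k a b c <-> exists j, F k j a b c).
  { intros k; unfold F; destruct (constructive_indefinite_description _ (H k)); auto. }
  exists (fun m a b c => exists k j, m = pr k j /\ F k j a b c). split.
  - intros m. destruct (classic (exists k j, m = pr k j)) as [(k&j&E)|Hc].
    + eapply basic3_ext; [apply (proj1 (HF k) j)|]. intros a b c; split; [intros; exists k, j; auto|].
      intros (k'&j'&E'&h). subst m. apply pr_inj in E'. destruct E'; subst; auto.
    + eapply basic3_ext; [apply basic3_empty|]. intros a b c; split; [intros []|]. intros (k&j&E&_); apply Hc; eauto.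
  - intros a b c; split.
    + intros [k Hk]. apply (proj2 (HF k)) in Hk. destruct Hk as [j Hj]. exists (pr k j), k, j; auto.
    + intros (m&k&j&E&Hj). exists k. apply (proj2 (HF k)). eauto.
Qed.

Lemma ou_union2 O1 O2 : ounion3 O1 -> ounion3 O2 -> ounion3 (fun a b c => O1 a b c \/ O2 a b c).
Proof.
  intros H1 H2. apply ou_ext with (fun a b c => exists k, (fun k a b c => (k = kz /\ O1 a b c) \/ (k <> kz /\ O2 a b c)) k a b c).
  - apply ou_unionK. intros k. destruct (classic (k = kz)) as [E|E].
    + eapply ou_ext; [apply H1|]. intros; tauto.
    + eapply ou_ext; [apply H2|]. intros; tauto.
  - intros a b c; split.
    + intros (k&[[_ h]|[_ h]]); auto.
    + intros [h|h]; [exists kz; auto|]. exists (fnat Hreg 1). right; split; auto.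
      apply (fnat_neq Hreg 1 0); auto.
Qed.

Lemma ou_inter_basic O B : ounion3 O -> basic3 B -> ounion3 (fun a b c => O a b c /\ B a b c).
Proof.
  intros (F&h1&h2) HB. exists (fun k a b c => F k a b c /\ B a b c); split.
  - intros k; apply basic3_inter; auto.
  - intros a b c; rewrite h2; split; [intros [[k ?] ?]; eauto | intros [k [? ?]]; eauto].
Qed.

Lemma ou_pull3 (h : K -> K) O : injective h -> ounion3 O -> ounion3 (fun a b c => O a b (fun x => c (h x))).
Proof.
  intros hi (F&h1&h2). exists (fun k a b c => F k a b (fun x => c (h x))). split.
  - intros k. destruct (h1 k) as (U&V&W&g1&g2&g3&g4).
    exists U, V, (fun c => W (fun x => c (h x))). split; [|split; [|split]]; auto using basic1_pull.
  - intros; apply h2.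
Qed.

Lemma ou_compl1 U : basic1 U -> ounion3 (fun a b c => ~ U a).
Proof.
  intros HU. destruct (basic1_complK _ HU) as (F&h1&h2).
  exists (fun k a b c => F k a); split.
  - intros k; exists (F k), (fun _ => True), (fun _ => True); repeat split; auto using basic1_full. tauto.
  - intros; apply h2.
Qed.
Lemma ou_compl2 U : basic1 U -> ounion3 (fun a b c => ~ U b).
Proof.
  intros HU. destruct (basic1_complK _ HU) as (F&h1&h2).
  exists (fun k a b c => F k b); split.
  - intros k; exists (fun _ => True), (F k), (fun _ => True); repeat split; auto using basic1_full. tauto.
  - intros; apply h2.
Qed.

Lemma basic3_tag (t v : K) : basic3 (fun a b c => c t = v).
Proof. exists (fun _ => True), (fun _ => True), (fun c => c t = v); repeat split; auto using basic1_full, basic1_single; tauto. Qed.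

Lemma glue1 (h : K -> K) (t c0 : K) (v : K -> K) : injective h -> (forall x, h x <> t) ->
  exists c : @Baire K, c t = c0 /\ forall x, c (h x) = v x.
Proof.
  intros hi ht.
  exists (fun y => if excluded_middle_informative (y = t) then c0 else v (epsilon (K_inh Hreg) (fun x => h x = y))).
  split.
  - destruct (excluded_middle_informative (t = t)); tauto.
  - intros x. destruct (excluded_middle_informative (h x = t)) as [E|_]; [exfalso; eapply ht; eauto|].
    f_equal. apply hi. apply (epsilon_spec (K_inh Hreg) (fun x' => h x' = h x)); eauto.
Qed.

Lemma glue2 (W : K -> K -> K) : exists c : @Baire K, forall k x, c (pr k x) = W k x.
Proof.
  set (dk := fun y => epsilon (inhabits (kz, kz)) (fun p : K * K => pr (fst p) (snd p) = y)).
  exists (fun y => W (fst (dk y)) (snd (dk y))). intros k x.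
  assert (E : pr (fst (dk (pr k x))) (snd (dk (pr k x))) = pr k x).
  { apply (epsilon_spec (inhabits (kz, kz)) (fun p : K * K => pr (fst p) (snd p) = pr k x)). exists (k, x); auto. }
  apply pr_inj in E. destruct E as [E1 E2]. rewrite E1, E2; auto.
Qed.

Definition NF (B : @Baire K * @Baire K -> Prop) : Prop :=
  exists C, closed3 C /\ forall a b, B (a, b) <-> exists c, C a b c.

Lemma NF_ext B B' : NF B -> (forall p, B p <-> B' p) -> NF B'.
Proof. intros (C&h1&h2) E; exists C; split; auto; intros; rewrite <- E; auto. Qed.

Lemma NF_empty : NF (fun _ => False).
Proof. exists (fun _ _ _ => False); split; [eapply ou_ext; [apply ou_basic, basic3_full|]; tauto|].
  intros; split; [intros []|intros [_ []]]. Qed.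
Lemma NF_full : NF (fun _ => True).
Proof. exists (fun _ _ _ => True); split; [eapply ou_ext; [apply ou_empty|]; tauto|].
  intros; split; auto; intros; exists (fun _ => kz); auto. Qed.

Lemma NF_basic B : basic2 B -> NF B.
Proof.
  intros (U&V&hU&hV&E). exists (fun a b c => U a /\ V b). split.
  - eapply ou_ext; [apply (ou_union2 _ _ (ou_compl1 _ hU) (ou_compl2 _ hV))|]. intros; tauto.
  - intros a b; rewrite E; simpl; split; [intros; exists (fun _ => kz); auto|intros [_ ?]; auto].
Qed.

Lemma NF_openK (F : K -> (@Baire K * @Baire K -> Prop)) : (forall k, basic2 (F k)) -> NF (fun p => exists k, F k p).
Proof.
  intros HF. exists (fun a b c => F (c kz) (a, b)). split.
  - apply ou_ext with (fun a b c => exists k, (fun k a b c => (~ F k (a, b)) /\ c kz = k) k a b c).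
    + apply ou_unionK. intros k. apply ou_inter_basic; [|apply basic3_tag].
      destruct (HF k) as (U&V&hU&hV&E).
      eapply ou_ext; [apply (ou_union2 _ _ (ou_compl1 _ hU) (ou_compl2 _ hV))|]. intros; rewrite E; simpl; tauto.
    + intros a b c; split; [intros (k&h&<-); auto|intros h; exists (c kz); auto].
  - intros a b; split; [intros [k Hk]; exists (fun _ => k); auto|intros [c Hc]; eauto].
Qed.

Lemma choiceK (A : Type) (P : K -> A -> Prop) : (forall k, exists x, P k x) -> exists f : K -> A, forall k, P k (f k).
Proof.
  intros H. exists (fun k => proj1_sig (constructive_indefinite_description _ (H k))).
  intros k; destruct (constructive_indefinite_description _ (H k)); auto.
Qed.

Lemma NF_unionK (B : K -> (@Baire K * @Baire K -> Prop)) : (forall k, NF (B k)) -> NF (fun p => exists k, B k p).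
Proof.
  intros HB. destruct (choiceK _ (fun k C => closed3 C /\ forall a b, B k (a, b) <-> exists c, C a b c) HB) as [C HC].
  set (tg := pr kz kz). set (h := fun x => pr (fnat Hreg 1) x).
  assert (hi : injective h). { intros x y E; apply pr_inj in E; tauto. }
  assert (ht : forall x, h x <> tg).
  { intros x E; apply pr_inj in E; destruct E as [E _]. apply (fnat_neq Hreg 1 0); auto. }
  exists (fun a b c => C (c tg) a b (fun x => c (h x))). split.
  - apply ou_ext with (fun a b c => exists k, (fun k a b c => (~ C k a b (fun x => c (h x))) /\ c tg = k) k a b c).
    + apply ou_unionK. intros k. apply ou_inter_basic; [|apply basic3_tag].
      apply (ou_pull3 h (fun a b c => ~ C k a b c) hi). apply HC.
    + intros a b c; split; [intros (k&h'&<-); auto|intros h'; exists (c tg); auto].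
  - intros a b; split.
    + intros [k Hk]. apply (proj2 (HC k)) in Hk. destruct Hk as [c Hc].
      destruct (glue1 h tg k c hi ht) as (c'&e1&e2). exists c'. rewrite e1.
      replace (fun x => c' (h x)) with c; auto. apply functional_extensionality; intros; rewrite e2; auto.
    + intros [c Hc]. exists (c tg). apply (proj2 (HC (c tg))). eauto.
Qed.

Lemma NF_interK (B : K -> (@Baire K * @Baire K -> Prop)) : (forall k, NF (B k)) -> NF (fun p => forall k, B k p).
Proof.
  intros HB. destruct (choiceK _ (fun k C => closed3 C /\ forall a b, B k (a, b) <-> exists c, C a b c) HB) as [C HC].
  exists (fun a b c => forall k, C k a b (fun x => c (pr k x))). split.
  - apply ou_ext with (fun a b c => exists k, (fun k a b c => ~ C k a b (fun x => c (pr k x))) k a b c).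
    + apply ou_unionK. intros k. apply (ou_pull3 (pr k) (fun a b c => ~ C k a b c)).
      * intros x y E; apply pr_inj in E; tauto.
      * apply HC.
    + intros a b c; split; [intros (k&h) H; apply h; auto|intros h; apply NNPP; intros h'; apply h; intros k; apply NNPP; intros h''; apply h'; eauto].
  - intros a b; split.
    + intros Hk. assert (H' : forall k, exists c, C k a b c) by (intros k; apply (proj2 (HC k)), Hk).
      destruct (choiceK _ _ H') as [W HW]. destruct (glue2 W) as [c Hc]. exists c. intros k.
      replace (fun x => c (pr k x)) with (W k); auto. apply functional_extensionality; intros; rewrite Hc; auto.
    + intros [c Hc] k. apply (proj2 (HC k)). eauto.
Qed.

Lemma NF_or A B : NF A -> NF B -> NF (fun p => A p \/ B p).
Proof.
  intros HA HB. eapply NF_ext; [apply (NF_unionK (fun k p => (k = kz /\ A p) \/ (k <> kz /\ B p)))|].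
  - intros k. destruct (classic (k = kz)) as [E|E]; [eapply NF_ext; [apply HA|]|eapply NF_ext; [apply HB|]]; intros; tauto.
  - intros p; split.
    + intros (k&[[_ h]|[_ h]]); auto.
    + intros [h|h]; [exists kz; auto|]. exists (fnat Hreg 1). right; split; auto.
      apply (fnat_neq Hreg 1 0); auto.
Qed.

Lemma NF_borel : forall B, @kBorel K _ basic2 B -> NF B /\ NF (fun p => ~ B p).
Proof.
  intros B HB. induction HB as [U HU|U HU IH|I F HI HF IH|I F HI HF IH|U V HU IH E].
  - split; [apply NF_basic; auto|].
    destruct HU as (U1&V1&h1&h2&E).
    destruct (basic1_complK _ h1) as (F1&g1&g2). destruct (basic1_complK _ h2) as (F2&g3&g4).
    eapply NF_ext; [apply (NF_or (fun p => exists k, F1 k (fst p)) (fun p => exists k, F2 k (snd p)))|].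
    + apply NF_openK. intros k. exists (F1 k), (fun _ => True). split; [auto|split; [apply basic1_full|intros; simpl; tauto]].
    + apply NF_openK. intros k. exists (fun _ => True), (F2 k). split; [apply basic1_full|split; [auto|intros; simpl; tauto]].
    + intros p; rewrite E, <- g2, <- g4; tauto.
  - split; [exact (proj2 IH)|]. eapply NF_ext; [exact (proj1 IH)|]. intros p; split; [tauto|apply NNPP].
  - destruct HI as [f fi]. split.
    + eapply NF_ext; [apply (NF_unionK (fun k p => exists i, f i = k /\ F i p))|].
      * intros k. destruct (classic (exists i, f i = k)) as [[i Ei]|Hn].
        -- eapply NF_ext; [apply (proj1 (IH i))|]. intros p; split; [intros; exists i; auto|].
           intros (i'&E'&h). subst k. apply fi in E'. subst; auto.
        -- eapply NF_ext; [apply NF_empty|]. intros p; split; [intros []|]. intros (i&E'&_); apply Hn; eauto.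
      * intros p; split; [intros (k&i&_&h); eauto|intros [i h]; exists (f i), i; auto].
    + eapply NF_ext; [apply (NF_interK (fun k p => forall i, f i = k -> ~ F i p))|].
      * intros k. destruct (classic (exists i, f i = k)) as [[i Ei]|Hn].
        -- eapply NF_ext; [apply (proj2 (IH i))|]. intros p; split; [intros h i' E'|intros h; apply h; auto].
           subst k. apply fi in E'. subst; auto.
        -- eapply NF_ext; [apply NF_full|]. intros p; split; auto. intros _ i E'; exfalso; apply Hn; eauto.
      * intros p; split; [intros h [i hi]; exact (h (f i) i eq_refl hi)|intros h k i _ hi; apply h; eauto].
  - destruct HI as [f fi]. split.
    + eapply NF_ext; [apply (NF_interK (fun k p => forall i, f i = k -> F i p))|].
      * intros k. destruct (classic (exists i, f i = k)) as [[i Ei]|Hn].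
        -- eapply NF_ext; [apply (proj1 (IH i))|]. intros p; split; [intros h i' E'|intros h; apply h; auto].
           subst k. apply fi in E'. subst; auto.
        -- eapply NF_ext; [apply NF_full|]. intros p; split; auto. intros _ i E'; exfalso; apply Hn; eauto.
      * intros p; split; [intros h i; exact (h (f i) i eq_refl)|intros h k i _; apply h].
    + eapply NF_ext; [apply (NF_unionK (fun k p => exists i, f i = k /\ ~ F i p))|].
      * intros k. destruct (classic (exists i, f i = k)) as [[i Ei]|Hn].
        -- eapply NF_ext; [apply (proj2 (IH i))|]. intros p; split; [intros; exists i; auto|].
           intros (i'&E'&h). subst k. apply fi in E'. subst; auto.
        -- eapply NF_ext; [apply NF_empty|]. intros p; split; [intros []|]. intros (i&E'&_); apply Hn; eauto.
      * intros p; split; [intros (k&i&_&h) h'; apply h, h'|].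
        intros h. apply NNPP; intros h'. apply h. intros i. apply NNPP; intros h''. apply h'. exists (f i), i; auto.
  - split; [eapply NF_ext; [exact (proj1 IH)|]; exact E|]. eapply NF_ext; [exact (proj2 IH)|]. intros p; specialize (E p); tauto.
Qed.

Lemma sigma11_NF (A : @Baire K -> Prop) : Sigma11 A -> exists C, closed3 C /\ forall a, A a <-> exists b c, C a b c.
Proof.
  intros (B&HB&E). destruct (proj1 (NF_borel B HB)) as (C&h1&h2). exists C; split; auto.
  intros a; rewrite E; split; [intros [b Hb]; apply h2 in Hb; eauto|intros (b&c&h); exists b; apply h2; eauto].
Qed.

End Basic.


Section Tree.
Context {K : Type} {lt : K -> K -> Prop} (Hreg : regular_cardinal lt).
Variables C1 C2 : @Baire K -> @Baire K -> @Baire K -> Prop.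

Notation small := (small lt).
Notation le := (le lt).
Notation kz := (kz Hreg).
Notation pr := (pr Hreg).

Definition Round : Type := ((K * K * K) * (K * K))%type.
Definition rdef : Round := ((kz, kz, kz), (kz, kz)).
Definition s_of (r : Round) : K := fst (fst (fst r)).

Inductive phase : Type := PhII | PhI (m : K * K * K) | PhG (g : K) | PhW (g w : K).

Record raw : Type := mkraw { rp : K; rd : K -> Round; rph : phase }.

Definition okT (d : K -> Round) (q : K) : Prop :=
  exists a b c, C1 a b c /\ forall x, lt x q -> fst (d x) = (a x, b x, c x).
Definition okS (d : K -> Round) (q : K) : Prop :=
  exists a b c, C2 a b c /\ forall x, lt x q -> s_of (d x) = a x /\ snd (d x) = (b x, c x).

Definition valid (t : raw) : Prop :=
  (forall x, ~ lt x (rp t) -> rd t x = rdef) /\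
  (forall q, lt q (rp t) -> okT (rd t) q /\ okS (rd t) q) /\
  match rph t with
  | PhII => True
  | PhI _ => okT (rd t) (rp t) /\ okS (rd t) (rp t)
  | PhG _ | PhW _ _ => okT (rd t) (rp t) /\ ~ okS (rd t) (rp t)
  end.

Definition Node : Type := {t : raw | valid t}.

Definition phc (ph : phase) (r : Round) : Prop :=
  match ph with PhII => True | PhI m => fst r = m | _ => False end.
Definition phlt (ph1 ph2 : phase) : Prop :=
  match ph1, ph2 with
  | PhII, PhI _ | PhII, PhG _ | PhII, PhW _ _ => True
  | PhG g, PhW g' _ => g = g'
  | _, _ => False
  end.
Definition rk (ph : phase) : nat := match ph with PhII => 0 | PhI _ | PhG _ => 1 | PhW _ _ => 2 end.

Definition rlt (t1 t2 : raw) : Prop :=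
  (lt (rp t1) (rp t2) /\ (forall x, lt x (rp t1) -> rd t1 x = rd t2 x) /\ phc (rph t1) (rd t2 (rp t1))) \/
  (rp t1 = rp t2 /\ rd t1 = rd t2 /\ phlt (rph t1) (rph t2)).

Definition tlt (n1 n2 : Node) : Prop := rlt (proj1_sig n1) (proj1_sig n2).

Lemma node_eq (n1 n2 : Node) : proj1_sig n1 = proj1_sig n2 -> n1 = n2.
Proof. apply sig_eq_. Qed.

Lemma raw_eq (t1 t2 : raw) : rp t1 = rp t2 -> rd t1 = rd t2 -> rph t1 = rph t2 -> t1 = t2.
Proof. destruct t1, t2; simpl; intros; subst; auto. Qed.

Lemma phlt_rk ph1 ph2 : phlt ph1 ph2 -> rk ph1 < rk ph2.
Proof. destruct ph1, ph2; simpl; try tauto; lia. Qed.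

Lemma phlt_trans a b c : phlt a b -> phlt b c -> phlt a c.
Proof. destruct a, b, c; simpl; auto; try tauto. Qed.

Lemma phc_phlt a b r : phlt a b -> phc b r -> phc a r.
Proof. destruct a, b; simpl; tauto. Qed.

Lemma rlt_irrefl t : ~ rlt t t.
Proof. intros [(H&_)|(_&_&H)]; [eapply (lt_irrefl Hreg); eauto| apply phlt_rk in H; lia]. Qed.

Lemma rlt_trans t1 t2 t3 : rlt t1 t2 -> rlt t2 t3 -> rlt t1 t3.
Proof.
  intros [(h1&h2&h3)|(h1&h2&h3)] [(g1&g2&g3)|(g1&g2&g3)].
  - left; split; [eapply (lt_trans Hreg); eauto|split].
    + intros x hx; rewrite h2, g2; auto; eapply (lt_trans Hreg); eauto.
    + rewrite <- g2; auto.
  - left; rewrite <- g1, <- g2; auto.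
  - left; rewrite h1, h2; split; auto; split; auto. eapply phc_phlt; eauto.
  - right; split; [congruence|split; [congruence|eapply phlt_trans; eauto]].
Qed.

Lemma rlt_measure t1 t2 : rlt t1 t2 -> lt (rp t1) (rp t2) \/ (rp t1 = rp t2 /\ rk (rph t1) < rk (rph t2)).
Proof. intros [(h1&_)|(h1&_&h3)]; auto. right; split; auto; apply phlt_rk; auto. Qed.

Lemma rlt_wf : well_founded rlt.
Proof.
  assert (forall p n t, rp t = p -> rk (rph t) = n -> Acc rlt t).
  { intros p; induction p as [p IHp] using (well_founded_ind (lt_wf Hreg)).
    intros n; induction n as [n IHn] using (well_founded_ind Wf_nat.lt_wf).
    intros t E1 E2; constructor; intros t' H. apply rlt_measure in H.
    destruct H as [H|[H H']]; [eapply IHp; eauto; congruence|eapply IHn; eauto; congruence]. }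
  intros t; eauto.
Qed.

Lemma tlt_wf : well_founded tlt.
Proof. unfold tlt.
  apply (wf_inverse_image Node raw rlt (@proj1_sig _ _) rlt_wf).
Qed.

Lemma okT_ext d d' q : (forall x, lt x q -> d x = d' x) -> okT d q -> okT d' q.
Proof. intros E (a&b&c&h1&h2); exists a, b, c; split; auto; intros x hx; rewrite <- E; auto. Qed.
Lemma okS_ext d d' q : (forall x, lt x q -> d x = d' x) -> okS d q -> okS d' q.
Proof. intros E (a&b&c&h1&h2); exists a, b, c; split; auto; intros x hx; rewrite <- E; auto. Qed.
Lemma okT_mono d q q' : le q' q -> okT d q -> okT d q'.
Proof. intros Hq (a&b&c&h1&h2); exists a, b, c; split; auto; intros x hx; apply h2; eapply (lt_le_trans Hreg); eauto. Qed.
Lemma okS_mono d q q' : le q' q -> okS d q -> okS d q'.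
Proof. intros Hq (a&b&c&h1&h2); exists a, b, c; split; auto; intros x hx; apply h2; eapply (lt_le_trans Hreg); eauto. Qed.

Definition ntle (n1 n2 : Node) : Prop := n1 = n2 \/ tlt n1 n2.

Lemma tle_p (n1 n2 : Node) : ntle n1 n2 -> le (rp (proj1_sig n1)) (rp (proj1_sig n2)).
Proof. intros [<-|H]; [right; auto|]. apply rlt_measure in H. destruct H as [H|[H _]]; [left|right]; auto. Qed.

Lemma tle_data (n1 n2 : Node) : ntle n1 n2 -> forall x, lt x (rp (proj1_sig n1)) -> rd (proj1_sig n1) x = rd (proj1_sig n2) x.
Proof. intros [<-|[(h1&h2&h3)|(h1&h2&h3)]] x hx; auto. rewrite h2; auto. Qed.

Lemma tlt_trans n1 n2 n3 : tlt n1 n2 -> tlt n2 n3 -> tlt n1 n3.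
Proof. apply rlt_trans. Qed.
Lemma tlt_irrefl n : ~ tlt n n.
Proof. apply rlt_irrefl. Qed.
Lemma tle_trans n1 n2 n3 : ntle n1 n2 -> ntle n2 n3 -> ntle n1 n3.
Proof. intros [<-|h] [<-|h']; unfold ntle; auto. right; eapply tlt_trans; eauto. Qed.
Lemma tle_tlt_trans n1 n2 n3 : ntle n1 n2 -> tlt n2 n3 -> tlt n1 n3.
Proof. intros [<-|h] h'; auto; eapply tlt_trans; eauto. Qed.
Lemma tlt_tle_trans n1 n2 n3 : tlt n1 n2 -> ntle n2 n3 -> tlt n1 n3.
Proof. intros h [<-|h']; auto; eapply tlt_trans; eauto. Qed.

Definition rrestr (t : raw) (x : K) : raw :=
  mkraw x (fun z => if excluded_middle_informative (lt z x) then rd t z else rdef) PhII.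

Lemma rrestr_valid t x : valid t -> lt x (rp t) -> valid (rrestr t x).
Proof.
  intros (V1&V2&V3) hx. split; [|split]; simpl; auto.
  - intros z hz; destruct (excluded_middle_informative (lt z x)); tauto.
  - intros q hq. destruct (V2 q) as [h1 h2]; [eapply (lt_trans Hreg); eauto|].
    split; [eapply okT_ext; [|exact h1]|eapply okS_ext; [|exact h2]];
    intros z hz; destruct (excluded_middle_informative (lt z x)) as [_|n]; auto; exfalso; apply n; eapply (lt_trans Hreg); eauto.
Qed.

Lemma rrestr_lt t x : lt x (rp t) -> rlt (rrestr t x) t.
Proof.
  intros hx; left; simpl; split; auto; split; auto.
  intros z hz; destruct (excluded_middle_informative (lt z x)); tauto.
Qed.

Lemma rrestr_alive t x : valid t -> lt x (rp t) -> okT (rd (rrestr t x)) x /\ okS (rd (rrestr t x)) x.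
Proof.
  intros (V1&V2&V3) hx. destruct (V2 x hx) as [h1 h2]. simpl.
  split; [eapply okT_ext; [|exact h1]|eapply okS_ext; [|exact h2]];
  intros z hz; destruct (excluded_middle_informative (lt z x)); tauto.
Qed.

Definition restr (n : Node) (x : K) (hx : lt x (rp (proj1_sig n))) : Node :=
  exist _ (rrestr (proj1_sig n) x) (rrestr_valid _ _ (proj2_sig n) hx).

Lemma data_eq_canon t1 t2 : valid t1 -> valid t2 -> rp t1 = rp t2 ->
  (forall x, lt x (rp t1) -> rd t1 x = rd t2 x) -> rd t1 = rd t2.
Proof.
  intros (V1&_) (W1&_) E H. apply functional_extensionality; intros x.
  destruct (classic (lt x (rp t1))) as [h|h]; auto. rewrite V1, W1; auto. congruence.
Qed.

Definition kmin : K := proj1_sig (constructive_indefinite_description _ (least_ex Hreg (fun _ => True) (ex_intro _ kz I))).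
Lemma kmin_le x : le kmin x.
Proof. unfold kmin. apply (proj2 (proj2_sig (constructive_indefinite_description _ (least_ex Hreg (fun _ => True) (ex_intro _ kz I))))); auto. Qed.
Lemma not_lt_kmin x : ~ lt x kmin.
Proof. intros h; apply (le_not_lt Hreg _ _ (kmin_le x)); auto. Qed.

Definition rroot : raw := mkraw kmin (fun _ => rdef) PhII.
Lemma rroot_valid : valid rroot.
Proof. split; [|split]; simpl; auto. intros q hq; exfalso; eapply not_lt_kmin; eauto. Qed.
Definition root : Node := exist _ rroot rroot_valid.

Lemma root_le n : ntle root n.
Proof.
  destruct n as [t Vt]. destruct (kmin_le (rp t)) as [h|h].
  - right; left; simpl; split; auto; split; auto. intros x hx; exfalso; eapply not_lt_kmin; eauto.
  - assert (Ed : rd t = fun _ => rdef).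
    { apply functional_extensionality; intros x; apply (proj1 Vt). rewrite <- h; apply not_lt_kmin. }
    destruct (rph t) eqn:Eph.
    + left; apply node_eq; simpl; apply raw_eq; simpl; auto.
    + right; right; simpl; rewrite Eph; auto.
    + right; right; simpl; rewrite Eph; auto.
    + right; right; simpl; rewrite Eph; auto.
Qed.

Lemma pred_comparable t a b : tlt a t -> tlt b t -> tlt a b \/ a = b \/ tlt b a.
Proof.
  destruct a as [ta Va], b as [tb Vb], t as [tt Vt]; unfold tlt; simpl.
  intros Ha Hb.
  assert (Da : forall x, lt x (rp ta) -> rd ta x = rd tt x) by (apply (tle_data (exist _ ta Va) (exist _ tt Vt)); right; auto).
  assert (Db : forall x, lt x (rp tb) -> rd tb x = rd tt x) by (apply (tle_data (exist _ tb Vb) (exist _ tt Vt)); right; auto).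
  destruct (lt_trich Hreg (rp ta) (rp tb)) as [h|[h|h]].
  - left; left; split; auto; split.
    + intros x hx; rewrite Da, Db; auto; eapply (lt_trans Hreg); eauto.
    + rewrite Db; auto. destruct Ha as [(_&_&g)|(g1&_&g)]; auto.
      exfalso. rewrite g1 in h. destruct Hb as [(g1'&_)|(g1'&_)]; [eapply (lt_asym Hreg); eauto | rewrite g1' in h; eapply (lt_irrefl Hreg); eauto].
  - assert (Edd : rd ta = rd tb).
    { apply data_eq_canon; auto. intros x hx; rewrite Da, Db; auto. congruence. }
    destruct Ha as [(a1&_&a3)|(a1&_&a3)]; destruct Hb as [(b1&_&b3)|(b1&_&b3)].
    + destruct (rph ta) eqn:Ea, (rph tb) eqn:Eb; simpl in a3, b3; try tauto;
      try (right; right; right; split; [congruence|split; [congruence|rewrite Ea, Eb; simpl; auto]]; fail);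
      try (left; right; split; [congruence|split; [congruence|rewrite Ea, Eb; simpl; auto]]; fail).
      * right; left; apply node_eq; simpl; apply raw_eq; auto; rewrite Ea, Eb; auto.
      * right; left; apply node_eq; simpl; apply raw_eq; auto; rewrite Ea, Eb, <- a3, <- b3, h; auto.
    + exfalso; rewrite <- b1, <- h in a1; eapply (lt_irrefl Hreg); eauto.
    + exfalso; rewrite <- a1, h in b1; eapply (lt_irrefl Hreg); eauto.
    + destruct (rph ta) eqn:Ea, (rph tb) eqn:Eb, (rph tt) eqn:Et; simpl in a3, b3; try tauto;
      try (right; right; right; split; [congruence|split; [congruence|rewrite Ea, Eb; simpl; auto]]; fail);
      try (left; right; split; [congruence|split; [congruence|rewrite Ea, Eb; simpl; auto]]; fail);
      try (right; left; apply node_eq; simpl; apply raw_eq; auto; rewrite Ea, Eb; congruence).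
  - right; right; left; split; auto; split.
    + intros x hx; rewrite Da, Db; auto; eapply (lt_trans Hreg); eauto.
    + rewrite Da; auto. destruct Hb as [(_&_&g)|(g1&_&g)]; auto.
      exfalso. rewrite g1 in h. destruct Ha as [(g1'&_)|(g1'&_)]; [eapply (lt_asym Hreg); eauto | rewrite g1' in h; eapply (lt_irrefl Hreg); eauto].
Qed.


Hypothesis HC1 : closed3 C1.
Hypothesis HC2 : closed3 C2.
Hypothesis Hdisj : forall a b c b' c', C1 a b c -> C2 a b' c' -> False.

Lemma bound3 x y z : exists q, lt x q /\ lt y q /\ lt z q.
Proof.
  destruct (small_bound2 Hreg _ _ (small_bound2 Hreg _ _ (small_single Hreg x) (small_single Hreg y)) (small_single Hreg z)) as [q Hq].
  exists q; split; [|split]; apply Hq; auto.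
Qed.

Lemma closed_local (C : @Baire K -> @Baire K -> @Baire K -> Prop) : closed3 C -> forall a b c,
  (forall q, exists a' b' c', C a' b' c' /\ forall x, lt x q -> a' x = a x /\ b' x = b x /\ c' x = c x) -> C a b c.
Proof.
  intros (F&hF&E) a b c H. apply NNPP; intros Hn. apply E in Hn. destruct Hn as [k Hk].
  destruct (hF k) as (U&V&W&hU&hV&hW&EF). apply EF in Hk. destruct Hk as (Ua&Vb&Wc).
  destruct (basic1_det Hreg U hU) as [h|[q1 h1]]; [eapply h; eauto|].
  destruct (basic1_det Hreg V hV) as [h|[q2 h2]]; [eapply h; eauto|].
  destruct (basic1_det Hreg W hW) as [h|[q3 h3]]; [eapply h; eauto|].
  destruct (bound3 q1 q2 q3) as (q&g1&g2&g3).
  destruct (H q) as (a'&b'&c'&HC&Hag).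
  apply (proj2 (E a' b' c')); [|exact HC]. exists k. apply EF. split; [|split].
  - apply (h1 a); auto. intros x hx; symmetry; apply Hag; eapply (lt_trans Hreg); eauto.
  - apply (h2 b); auto. intros x hx; symmetry; apply Hag; eapply (lt_trans Hreg); eauto.
  - apply (h3 c); auto. intros x hx; symmetry; apply Hag; eapply (lt_trans Hreg); eauto.
Qed.

Definition pN (n : Node) : K := rp (proj1_sig n).
Definition dN (n : Node) : K -> Round := rd (proj1_sig n).
Definition phN (n : Node) : phase := rph (proj1_sig n).

Definition chainG (G : Node -> Prop) : Prop := forall n1 n2, G n1 -> G n2 -> ntle n1 n2 \/ ntle n2 n1.

Lemma chain_data G n1 n2 x : chainG G -> G n1 -> G n2 -> lt x (pN n1) -> lt x (pN n2) -> dN n1 x = dN n2 x.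
Proof.
  intros HG h1 h2 x1 x2. destruct (HG n1 n2 h1 h2) as [H|H].
  - apply tle_data; auto.
  - symmetry; apply tle_data; auto.
Qed.

Definition dsup (G : Node -> Prop) (x : K) : Round :=
  match excluded_middle_informative (exists n, G n /\ lt x (pN n)) with
  | left H => dN (proj1_sig (constructive_indefinite_description _ H)) x
  | right _ => rdef
  end.

Lemma dsup_spec G n x : chainG G -> G n -> lt x (pN n) -> dsup G x = dN n x.
Proof.
  intros HG hn hx. unfold dsup. destruct (excluded_middle_informative _) as [H|H]; [|exfalso; eauto].
  destruct (constructive_indefinite_description _ H) as [n' [h1 h2]]; simpl.
  apply chain_data with G; auto.
Qed.

Lemma dsup_out G x : (forall n, G n -> ~ lt x (pN n)) -> dsup G x = rdef.
Proof. intros H; unfold dsup; destruct (excluded_middle_informative _) as [[n [h1 h2]]|_]; auto. exfalso; eapply H; eauto. Qed.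

Lemma chain_unbounded G : chainG G -> (forall q, exists n, G n /\ lt q (pN n)) -> False.
Proof.
  intros HG Hu.
  set (a := fun x => s_of (dsup G x)).
  set (b := fun x => snd (fst (fst (dsup G x)))).
  set (c := fun x => snd (fst (dsup G x))).
  set (b' := fun x => fst (snd (dsup G x))).
  set (c' := fun x => snd (snd (dsup G x))).
  apply (Hdisj a b c b' c').
  - apply (closed_local C1 HC1). intros q. destruct (Hu q) as [n [hn hq]].
    destruct (proj2_sig n) as [_ [V2 _]]. destruct (V2 q hq) as [(a0&b0&c0&h0&e0) _].
    exists a0, b0, c0; split; auto. intros x hx.
    assert (E : dsup G x = dN n x) by (apply dsup_spec; auto; eapply (lt_trans Hreg); eauto).
    unfold a, b, c, s_of; rewrite E. unfold dN. rewrite (e0 x hx). simpl. auto.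
  - apply (closed_local C2 HC2). intros q. destruct (Hu q) as [n [hn hq]].
    destruct (proj2_sig n) as [_ [V2 _]]. destruct (V2 q hq) as [_ (a0&b0&c0&h0&e0)].
    exists a0, b0, c0; split; auto. intros x hx.
    assert (E : dsup G x = dN n x) by (apply dsup_spec; auto; eapply (lt_trans Hreg); eauto).
    destruct (e0 x hx) as [e1 e2].
    unfold a, b', c'; rewrite E. unfold dN. rewrite e1, e2. simpl. auto.
Qed.

Lemma max_rank (A : Type) (P : A -> Prop) (f : A -> nat) : (exists x, P x) -> (forall x, P x -> f x <= 2) ->
  exists x, P x /\ forall y, P y -> f y <= f x.
Proof.
  intros [x0 h0] Hb.
  destruct (classic (exists x, P x /\ f x = 2)) as [(x&h&e)|n2].
  { exists x; split; auto; intros y hy; rewrite e; auto. }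
  destruct (classic (exists x, P x /\ f x = 1)) as [(x&h&e)|n1].
  { exists x; split; auto; intros y hy. specialize (Hb y hy).
    destruct (PeanoNat.Nat.eq_dec (f y) 2); [exfalso; eauto|lia]. }
  exists x0; split; auto. intros y hy. pose proof (Hb y hy) as Hy.
  destruct (PeanoNat.Nat.eq_dec (f y) 2); [exfalso; eauto|].
  destruct (PeanoNat.Nat.eq_dec (f y) 1); [exfalso; eauto|]. lia.
Qed.

Lemma chain_lt_rlt G n n' : chainG G -> G n -> G n' -> lt (pN n) (pN n') ->
  tlt n n' /\ phc (phN n) (dN n' (pN n)).
Proof.
  intros HG h h' hl. destruct (HG n n' h h') as [[E|H]|H].
  - subst; exfalso; eapply (lt_irrefl Hreg); eauto.
  - split; auto. destruct H as [(_&_&g)|(g&_)]; auto. exfalso; unfold pN in hl; rewrite g in hl; eapply (lt_irrefl Hreg); eauto.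
  - exfalso. apply tle_p in H. eapply (le_not_lt Hreg); eauto.
Qed.

Lemma chain_sup G : chainG G ->
  (exists n, G n /\ forall n', G n' -> ntle n' n) \/
  (exists t, (forall n, G n -> tlt n t) /\ (forall u, (forall n, G n -> ntle n u) -> ntle t u) /\
     (forall s, tlt s t -> exists n, G n /\ tlt s n) /\
     (forall x, lt x (pN t) -> exists n, G n /\ lt x (pN n) /\ dN t x = dN n x) /\ phN t = PhII).
Proof.
  intros HG.
  assert (Hb : exists q, forall n, G n -> le (pN n) q).
  { apply NNPP; intros Hn. apply (chain_unbounded G HG). intros q. apply NNPP; intros Hq. apply Hn. exists q.
    intros n hn. apply (not_lt_le Hreg). intros h; apply Hq; eauto. }
  destruct (least_ex Hreg _ Hb) as [ps [Hps Hleast]].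
  destruct (classic (exists n, G n /\ pN n = ps)) as [HA|HB].
  - left. destruct (max_rank _ (fun n => G n /\ pN n = ps) (fun n => rk (phN n)) HA) as [n0 [[h0 e0] hmax]].
    { intros n _; destruct (phN n); simpl; lia. }
    exists n0; split; auto. intros n' hn'. destruct (HG n' n0 hn' h0) as [H|[E|H]]; auto.
    + subst; left; auto.
    + exfalso. apply rlt_measure in H. fold (pN n0) (pN n') in H. destruct H as [H|[H H']].
      * eapply (le_not_lt Hreg); [apply (Hps n' hn')|]. rewrite <- e0; auto.
      * specialize (hmax n' (conj hn' (eq_trans (eq_sym H) e0))). unfold phN in hmax. lia.
  - right.
    assert (Hlt : forall n, G n -> lt (pN n) ps).
    { intros n hn. destruct (Hps n hn) as [h|h]; auto. exfalso; apply HB; eauto. }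
    assert (Hin : forall x, lt x ps -> exists n, G n /\ lt x (pN n)).
    { intros x hx. apply NNPP; intros Hn. apply (le_not_lt Hreg _ _ (Hleast x (fun n hn => not_lt_le Hreg _ _ (fun h => Hn (ex_intro _ n (conj hn h)))))). auto. }
    set (ts := mkraw ps (dsup G) PhII).
    assert (Vts : valid ts).
    { split; [|split]; simpl; auto.
      - intros x hx. apply dsup_out. intros n hn h. apply hx. eapply (lt_trans Hreg); eauto.
      - intros q hq. destruct (Hin q hq) as [n [hn h]]. destruct (proj2_sig n) as [_ [V2 _]].
        destruct (V2 q h) as [g1 g2]. split; [eapply okT_ext; [|exact g1]|eapply okS_ext; [|exact g2]];
        intros x hx; symmetry; apply dsup_spec; auto; eapply (lt_trans Hreg); eauto. }
    set (t := exist valid ts Vts : Node).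
    assert (Ht1 : forall n, G n -> tlt n t).
    { intros n hn. left. simpl. split; [apply Hlt; auto|split].
      - intros x hx. symmetry; apply dsup_spec; auto.
      - destruct (Hin (pN n) (Hlt n hn)) as [n' [hn' h']].
        destruct (chain_lt_rlt G n n' HG hn hn' h') as [_ g]. rewrite (dsup_spec G n'); auto. }
    exists t; split; [|split; [|split; [|split]]]; auto.
    + intros u Hu. assert (Hpu : le ps (pN u)) by (apply Hleast; intros n hn; apply tle_p; auto).
      assert (Hdu : forall x, lt x ps -> dsup G x = dN u x).
      { intros x hx. destruct (Hin x hx) as [n [hn h]]. rewrite (dsup_spec G n); auto. apply tle_data; auto. }
      destruct Hpu as [h|h].
      * right; left; simpl; split; auto.
      * assert (Ed : dsup G = dN u).
        { apply (data_eq_canon ts (proj1_sig u) Vts (proj2_sig u)); auto. }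
        destruct (phN u) eqn:Ep.
        -- left; apply node_eq; simpl; apply raw_eq; auto.
        -- right; right; simpl; split; auto; split; auto. unfold phN in Ep; rewrite Ep; simpl; auto.
        -- right; right; simpl; split; auto; split; auto. unfold phN in Ep; rewrite Ep; simpl; auto.
        -- right; right; simpl; split; auto; split; auto. unfold phN in Ep; rewrite Ep; simpl; auto.
    + intros s Hs. destruct Hs as [(h1&h2&h3)|(_&_&h3)]; simpl in *.
      * destruct (Hin _ h1) as [n [hn h]]. exists n; split; auto. left; split; auto; split.
        -- intros x hx. rewrite h2; auto. apply dsup_spec; auto. eapply (lt_trans Hreg); eauto.
        -- pose proof (dsup_spec G n (rp (proj1_sig s)) HG hn h) as Eq; unfold dN in Eq; rewrite <- Eq; auto.
      * destruct (rph (proj1_sig s)); simpl in h3; tauto.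
    + intros x hx. destruct (Hin x hx) as [n [hn h]]. exists n; split; auto; split; auto. apply dsup_spec; auto.
Qed.

Definition Lab (n : Node) : @label K :=
  match rph (proj1_sig n) with
  | PhII => if excluded_middle_informative (okT (dN n) (pN n)) then
              (if excluded_middle_informative (okS (dN n) (pN n)) then LUnion else LInter)
            else LLeaf (fun _ => False)
  | PhI _ => LInter
  | PhG _ => LUnion
  | PhW g w => LLeaf (fun xi => xi g = w /\ (lt g (pN n) -> w = s_of (dN n g)))
  end.

Definition mknode (t : raw) (n : Node) : Node :=
  match excluded_middle_informative (valid t) with left H => exist _ t H | right _ => n end.
Lemma mknode_eq t n : valid t -> proj1_sig (mknode t n) = t.
Proof. intros H; unfold mknode; destruct (excluded_middle_informative (valid t)); tauto. Qed.

Definition succK (p : K) : K :=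
  proj1_sig (constructive_indefinite_description _ (least_ex Hreg (fun b => lt p b) (exists_gt Hreg p))).
Lemma succK_spec p : lt p (succK p) /\ forall b, lt p b -> le (succK p) b.
Proof. unfold succK. apply (proj2_sig (constructive_indefinite_description _ (least_ex Hreg (fun b => lt p b) (exists_gt Hreg p)))). Qed.
Lemma lt_succK x p : lt x (succK p) <-> le x p.
Proof.
  destruct (succK_spec p) as [h1 h2]. split.
  - intros hx. apply (not_lt_le Hreg). intros hp. apply (le_not_lt Hreg _ _ (h2 x hp)); auto.
  - intros [h|h]; [eapply (lt_trans Hreg); eauto|subst; auto].
Qed.

Definition rnext (t : raw) (r : Round) : raw :=
  mkraw (succK (rp t)) (fun x => if excluded_middle_informative (lt x (rp t)) then rd t x
                                 else if excluded_middle_informative (x = rp t) then r else rdef) PhII.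

Lemma rnext_valid t m i : valid t -> rph t = PhI m -> valid (rnext t (m, i)).
Proof.
  intros (V1&V2&V3) E. rewrite E in V3. destruct V3 as [W1 W2]. split; [|split]; simpl; auto.
  - intros x hx. rewrite lt_succK in hx. destruct (excluded_middle_informative (lt x (rp t))) as [h|h]; [exfalso; apply hx; left; auto|].
    destruct (excluded_middle_informative (x = rp t)) as [h'|h']; auto. exfalso; apply hx; right; auto.
  - intros q hq. rewrite lt_succK in hq.
    assert (Ed : forall x, lt x q -> rd t x = (if excluded_middle_informative (lt x (rp t)) then rd t x
                                 else if excluded_middle_informative (x = rp t) then (m, i) else rdef)).
    { intros x hx. destruct (excluded_middle_informative (lt x (rp t))) as [_|h]; auto. exfalso; apply h.
      eapply (lt_le_trans Hreg); eauto. }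
    destruct hq as [hq|hq].
    + destruct (V2 q hq); split; [eapply okT_ext|eapply okS_ext]; eauto.
    + subst q; split; [eapply okT_ext|eapply okS_ext]; eauto.
Qed.

Lemma rnext_lt t m i : rph t = PhI m -> rlt t (rnext t (m, i)).
Proof.
  intros E. left; simpl. split; [apply succK_spec|split].
  - intros x hx. destruct (excluded_middle_informative (lt x (rp t))); tauto.
  - rewrite E. simpl. destruct (excluded_middle_informative (lt (rp t) (rp t))) as [h|_]; [exfalso; eapply (lt_irrefl Hreg); eauto|].
    destruct (excluded_middle_informative (rp t = rp t)); tauto.
Qed.

Lemma no_succ_dead_okT (n s : Node) : ~ okT (dN n) (pN n) -> ~ tlt n s.
Proof.
  intros h H. destruct H as [(h1&h2&h3)|(h1&h2&h3)].
  - destruct (proj2_sig s) as [_ [V2 _]]. destruct (V2 _ h1) as [g _]. apply h.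
    eapply okT_ext; [|exact g]. intros x hx; symmetry; apply h2; auto.
  - destruct (proj2_sig s) as [_ [_ V3]]. apply h. unfold dN, pN; rewrite h1, h2.
    destruct (rph (proj1_sig s)) eqn:E; [destruct (rph (proj1_sig n)); simpl in h3; tauto|tauto|tauto|tauto].
Qed.

Lemma leaf_or_succ (n : Node) :
  (exists U, Lab n = LLeaf U /\ basic1 U /\ leaf tlt n) \/
  ((Lab n = LUnion \/ Lab n = LInter) /\ exists s, tlt n s).
Proof.
  destruct n as [t Vt]. unfold Lab, pN, dN; simpl. destruct Vt as (V1&V2&V3) eqn:EV.
  destruct t as [p d ph]; simpl in *. destruct ph as [|m|g|g w].
  - destruct (excluded_middle_informative (okT d p)) as [hT|hT].
    + destruct (excluded_middle_informative (okS d p)) as [hS|hS].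
      * right; split; auto. assert (Vs : valid (mkraw p d (PhI (kz, kz, kz)))) by (split; [|split]; simpl; auto).
        exists (exist _ _ Vs). right; simpl; auto.
      * right; split; auto. assert (Vs : valid (mkraw p d (PhG kz))) by (split; [|split]; simpl; auto).
        exists (exist _ _ Vs). right; simpl; auto.
    + left; exists (fun _ => False); split; auto; split; [apply basic1_empty|].
      intros [s Hs]. eapply (no_succ_dead_okT (exist _ (mkraw p d PhII) Vt)); eauto.
  - right; split; auto. exists (exist _ _ (rnext_valid _ m (kz, kz) Vt eq_refl)). apply rnext_lt; auto.
  - right; split; auto. assert (Vs : valid (mkraw p d (PhW g kz))) by (split; [|split]; simpl; auto).
    exists (exist _ _ Vs). right; simpl; auto.
  - left; eexists; split; [reflexivity|split].
    + destruct (classic (lt g p -> w = s_of (d g))) as [h|h].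
      * eapply basic1_ext; [apply (basic1_single Hreg g w)|]. intros z; tauto.
      * eapply basic1_ext; [apply basic1_empty|]. intros z; tauto.
    + intros [s Hs]. destruct Hs as [(h1&h2&h3)|(h1&h2&h3)]; simpl in *; [tauto|].
      destruct (rph (proj1_sig s)); simpl in h3; tauto.
Qed.

Lemma leaf_Lab (n : Node) : leaf tlt n -> exists U, Lab n = LLeaf U /\ basic1 U.
Proof.
  intros Hl. destruct (leaf_or_succ n) as [(U&h1&h2&_)|(_&H)]; eauto. exfalso; apply Hl; auto.
Qed.

Lemma Lab_leaf (n : Node) U : Lab n = LLeaf U -> leaf tlt n.
Proof.
  intros E. destruct (leaf_or_succ n) as [(U'&h1&h2&h3)|([h|h]&_)]; auto; rewrite E in h; discriminate.
Qed.

Lemma imm_gen (n s : Node) : imm_succ tlt n s ->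
  (pN s = pN n /\ dN s = dN n /\ phlt (phN n) (phN s)) \/
  (pN s = succK (pN n) /\ phN s = PhII /\ forall x, lt x (pN n) -> dN s x = dN n x).
Proof.
  intros [H Hn]. destruct H as [(h1&h2&h3)|(h1&h2&h3)]; [right|left; auto].
  assert (Hph : phN s = PhII).
  { destruct (phN s) eqn:E; auto; exfalso;
    (assert (Vu : valid (mkraw (pN s) (dN s) PhII)) by
      (destruct (proj2_sig s) as (W1&W2&_); split; [|split]; simpl; auto));
    apply Hn; exists (exist _ _ Vu); (split;
    [left; simpl; auto | right; simpl; split; auto; split; auto; unfold phN in E; rewrite E; simpl; auto]). }
  split; [|split; auto].
  - destruct (proj2 (succK_spec (pN n)) (pN s) h1) as [h|h]; auto.
    exfalso. apply Hn. exists (restr s (succK (pN n)) h). split.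
    + left; simpl. split; [apply succK_spec|split].
      * intros x hx. destruct (excluded_middle_informative (lt x (succK (pN n)))) as [_|c].
        -- apply h2; auto.
        -- exfalso; apply c. eapply (lt_trans Hreg); eauto. apply succK_spec.
      * match goal with |- context [excluded_middle_informative ?P] => destruct (excluded_middle_informative P) as [_|c] end;
        [exact h3|exfalso; apply c; apply succK_spec].
    + apply rrestr_lt; auto.
  - intros x hx; symmetry; apply h2; auto.
Qed.

Definition k_ (i : nat) : K := fnat Hreg i.
Lemma k_neq i j : i <> j -> k_ i <> k_ j.
Proof. apply fnat_neq. Qed.

Definition phcode (ph : phase) : K :=
  match ph with
  | PhII => pr (k_ 0) (k_ 0)
  | PhI m => pr (k_ 1) (pr (pr (fst (fst m)) (snd (fst m))) (snd m))
  | PhG g => pr (k_ 2) g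
  | PhW g w => pr (k_ 3) (pr g w)
  end.
Lemma phcode_inj ph1 ph2 : phcode ph1 = phcode ph2 -> ph1 = ph2.
Proof.
  destruct ph1 as [|[[a b] c]|g|g w], ph2 as [|[[a' b'] c']|g'|g' w']; simpl; intros E;
  apply pr_inj in E; destruct E as [E1 E2];
  try (exfalso; eapply k_neq; [|exact E1]; discriminate); auto.
  - apply pr_inj in E2; destruct E2 as [E2 E3]; apply pr_inj in E2; destruct E2; subst; auto.
  - subst; auto.
  - apply pr_inj in E2; destruct E2; subst; auto.
Qed.

Definition rcode (r : Round) : K :=
  pr (pr (pr (fst (fst (fst r))) (snd (fst (fst r)))) (snd (fst r))) (pr (fst (snd r)) (snd (snd r))).
Lemma rcode_inj r1 r2 : rcode r1 = rcode r2 -> r1 = r2.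
Proof.
  destruct r1 as [[[a b] c] [d e]], r2 as [[[a' b'] c'] [d' e']]; unfold rcode; simpl; intros E.
  apply pr_inj in E; destruct E as [E1 E2]. apply pr_inj in E1; destruct E1 as [E1 E3].
  apply pr_inj in E1; destruct E1. apply pr_inj in E2; destruct E2. subst; auto.
Qed.

Lemma imm_card (n : Node) : card_le {s | imm_succ tlt n s} K.
Proof.
  exists (fun s => pr (phcode (phN (proj1_sig s))) (rcode (dN (proj1_sig s) (pN n)))).
  intros [s1 h1] [s2 h2] E; simpl in E. apply sig_eq_; simpl.
  apply pr_inj in E; destruct E as [E1 E2]. apply phcode_inj in E1. apply rcode_inj in E2.
  apply node_eq.
  destruct (imm_gen n s1 h1) as [(a1&a2&a3)|(a1&a2&a3)]; destruct (imm_gen n s2 h2) as [(b1&b2&b3)|(b1&b2&b3)].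
  - apply raw_eq; [unfold pN in *; congruence|unfold dN in *; congruence|exact E1].
  - exfalso. rewrite E1, b2 in a3. destruct (phN n); simpl in a3; tauto.
  - exfalso. rewrite <- E1, a2 in b3. destruct (phN n); simpl in b3; tauto.
  - apply raw_eq; [unfold pN in *; congruence| |exact E1].
    apply data_eq_canon; try apply proj2_sig; [unfold pN in *; congruence|].
    intros x hx. fold (pN s1) in hx. rewrite a1, lt_succK in hx. destruct hx as [hx|hx].
    + fold (dN s1 x) (dN s2 x). rewrite a3, b3; auto.
    + subst x. auto.
Qed.


Definition nxt (p : K) : K := proj1_sig (constructive_indefinite_description _ (exists_gt Hreg p)).
Lemma nxt_spec p : lt p (nxt p).
Proof. unfold nxt; apply (proj2_sig (constructive_indefinite_description _ (exists_gt Hreg p))). Qed.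

Definition encN (n : Node) : KltK lt :=
  existT _ (nxt (pN n)) (fun b : {b | lt b (nxt (pN n))} =>
    if excluded_middle_informative (lt (proj1_sig b) (pN n)) then pr (k_ 1) (rcode (dN n (proj1_sig b)))
    else pr (k_ 0) (phcode (phN n))).

Lemma existT_app (a1 a2 : K) (g1 : {b | lt b a1} -> K) (g2 : {b | lt b a2} -> K) :
  existT (fun a => {b | lt b a} -> K) a1 g1 = existT _ a2 g2 -> forall x h1 h2, g1 (exist _ x h1) = g2 (exist _ x h2).
Proof.
  intros E. assert (Ea : a1 = a2) by (exact (f_equal (@projT1 _ _) E)). subst a2.
  apply inj_pairT2 in E. subst g2. intros; f_equal; f_equal; apply proof_irrelevance.
Qed.

Lemma card_Node : card_le Node (KltK lt).
Proof.
  exists encN. intros n1 n2 E. unfold encN in E.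
  pose proof (existT_app _ _ _ _ E) as EA. simpl in EA.
  assert (Ep : pN n1 = pN n2).
  { destruct (lt_trich Hreg (pN n1) (pN n2)) as [h|[h|h]]; auto; exfalso.
    - specialize (EA (pN n1) (nxt_spec _) (lt_trans Hreg _ _ _ h (nxt_spec _))).
      destruct (excluded_middle_informative (lt (pN n1) (pN n1))) as [c|_]; [eapply (lt_irrefl Hreg); eauto|].
      destruct (excluded_middle_informative (lt (pN n1) (pN n2))) as [_|c]; [|tauto].
      apply pr_inj in EA. destruct EA as [EA _]. eapply k_neq; [|exact EA]. discriminate.
    - specialize (EA (pN n2) (lt_trans Hreg _ _ _ h (nxt_spec _)) (nxt_spec _)).
      destruct (excluded_middle_informative (lt (pN n2) (pN n2))) as [c|_]; [eapply (lt_irrefl Hreg); eauto|].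
      destruct (excluded_middle_informative (lt (pN n2) (pN n1))) as [_|c]; [|tauto].
      apply pr_inj in EA. destruct EA as [EA _]. eapply k_neq; [|exact EA]. discriminate. }
  assert (Hx : forall x, le x (pN n1) -> lt x (nxt (pN n1)) /\ lt x (nxt (pN n2))).
  { intros x hx. rewrite <- Ep. split; eapply (le_lt_trans Hreg); eauto; apply nxt_spec. }
  apply node_eq. apply raw_eq; auto.
  - apply data_eq_canon; try apply proj2_sig; auto. intros x hx.
    destruct (Hx x (or_introl hx)) as [h1 h2]. specialize (EA x h1 h2).
    destruct (excluded_middle_informative (lt x (pN n1))) as [_|c]; [|tauto].
    destruct (excluded_middle_informative (lt x (pN n2))) as [_|c]; [|rewrite <- Ep in c; tauto].
    apply pr_inj in EA. apply rcode_inj. tauto.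
  - destruct (Hx (pN n1) (or_intror eq_refl)) as [h1 h2]. specialize (EA _ h1 h2).
    destruct (excluded_middle_informative (lt (pN n1) (pN n1))) as [c|_]; [exfalso; eapply (lt_irrefl Hreg); eauto|].
    destruct (excluded_middle_informative (lt (pN n1) (pN n2))) as [c|_]; [rewrite <- Ep in c; exfalso; eapply (lt_irrefl Hreg); eauto|].
    apply pr_inj in EA. apply phcode_inj. tauto.
Qed.

Lemma no_branch : ~ exists f : K -> Node, forall a b, lt a b -> tlt (f a) (f b).
Proof.
  intros [f Hf].
  set (G := fun n => exists a, f a = n).
  assert (HG : chainG G).
  { intros n1 n2 [a <-] [b <-]. destruct (lt_trich Hreg a b) as [h|[h|h]].
    - left; right; auto.
    - subst; left; left; auto.
    - right; right; auto. }
  destruct (classic (forall q, exists n, G n /\ lt q (pN n))) as [Hu|Hb].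
  { exact (chain_unbounded G HG Hu). }
  assert (Hq : exists q, forall a, le (pN (f a)) q).
  { apply NNPP; intros Hn. apply Hb. intros q. apply NNPP; intros Hq. apply Hn. exists q. intros a.
    apply (not_lt_le Hreg). intros h. apply Hq. exists (f a). split; [exists a|]; auto. }
  destruct Hq as [q Hq].
  destruct (bound3 q (k_ 0) (k_ 1)) as (B1&g1&g2&g3).
  destruct (bound3 B1 (k_ 2) (k_ 2)) as (B&g4&g5&_).
  apply (sq_notbig Hreg B).
  assert (HrB : forall a, lt (k_ (rk (phN (f a)))) B).
  { intros a. destruct (phN (f a)); simpl; auto; eapply (lt_trans Hreg); eauto. }
  assert (HpB : forall a, lt (pN (f a)) B).
  { intros a. eapply (le_lt_trans Hreg); [apply Hq|]. eapply (lt_trans Hreg); eauto. }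
  exists (fun a => (exist (fun c => lt c B) (pN (f a)) (HpB a), exist (fun c => lt c B) (k_ (rk (phN (f a)))) (HrB a))).
  intros a b E. injection E; intros E2 E1.
  destruct (lt_trich Hreg a b) as [h|[h|h]]; auto; exfalso.
  - apply Hf in h. apply rlt_measure in h. fold (pN (f a)) (pN (f b)) (phN (f a)) (phN (f b)) in h.
    destruct h as [h|[_ h]]; [rewrite E1 in h; eapply (lt_irrefl Hreg); eauto|].
    apply fnat_inj in E2. lia.
  - apply Hf in h. apply rlt_measure in h. fold (pN (f a)) (pN (f b)) (phN (f a)) (phN (f b)) in h.
    destruct h as [h|[_ h]]; [rewrite E1 in h; eapply (lt_irrefl Hreg); eauto|].
    apply fnat_inj in E2. lia.
Qed.

Lemma sup_cond : forall (a : K) (f : {b : K | lt b a} -> Node),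
  (forall x y, lt (proj1_sig x) (proj1_sig y) -> tlt (f x) (f y)) ->
  exists s, (forall x, ntle (f x) s) /\ (forall u, (forall x, ntle (f x) u) -> ntle s u).
Proof.
  intros a f Hf. set (G := fun n => exists x, f x = n).
  assert (HG : chainG G).
  { intros n1 n2 [x <-] [y <-]. destruct (lt_trich Hreg (proj1_sig x) (proj1_sig y)) as [h|[h|h]].
    - left; right; auto.
    - apply sig_eq_ in h; subst; left; left; auto.
    - right; right; auto. }
  destruct (chain_sup G HG) as [(n&[x0 <-]&h)|(t&h1&h2&_)].
  - exists (f x0); split; [intros x; apply h; exists x; auto|]. intros u Hu; apply Hu.
  - exists t; split; [intros x; right; apply h1; exists x; auto|]. intros u Hu; apply h2.
    intros n [x <-]; auto.
Qed.

Lemma good : good_tree lt tlt root Lab (KltK lt).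
Proof.
  split; [exact tlt_irrefl|]. split; [exact tlt_trans|]. split; [exact root_le|].
  split; [exact pred_comparable|]. split; [exact tlt_wf|]. split; [exact no_branch|].
  split; [exact imm_card|]. split; [exact card_Node|]. split; [exact sup_cond|].
  split.
  - intros t Hl. destruct (leaf_or_succ t) as [(U&_&_&h)|(h&_)]; [tauto|auto].
  - exact leaf_Lab.
Qed.


Definition strat (a b c : @Baire K) (n : Node) : Node :=
  match rph (proj1_sig n) with
  | PhII => mknode (mkraw (pN n) (dN n) (PhI (a (pN n), b (pN n), c (pN n)))) n
  | PhG g => mknode (mkraw (pN n) (dN n) (PhW g (a g))) n
  | _ => n
  end.

Lemma imm_same (n s : Node) : pN s = pN n -> dN s = dN n -> phlt (phN n) (phN s) ->
  (forall ph, phlt (phN n) ph -> phlt ph (phN s) -> False) -> imm_succ tlt n s.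
Proof.
  intros E1 E2 E3 Hb. split; [right; unfold pN, dN, phN in *; auto|].
  intros [u [H1 H2]]. destruct H1 as [(a1&a2&a3)|(a1&a2&a3)]; destruct H2 as [(b1&b2&b3)|(b1&b2&b3)];
  fold (pN n) (pN u) (pN s) (dN n) (dN u) (dN s) (phN n) (phN u) (phN s) in *.
  - rewrite E1 in b1. eapply (lt_asym Hreg); eauto.
  - rewrite E1 in b1. rewrite b1 in a1. eapply (lt_irrefl Hreg); eauto.
  - rewrite E1, <- a1 in b1. eapply (lt_irrefl Hreg); eauto.
  - eapply Hb; eauto.
Qed.

Lemma node_alive_valid (n : Node) ph : phN n = ph ->
  (ph = PhII -> True) -> True.
Proof. auto. Qed.

Lemma Lab_union (n : Node) : Lab n = LUnion ->
  (phN n = PhII /\ okT (dN n) (pN n) /\ okS (dN n) (pN n)) \/ (exists g, phN n = PhG g).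
Proof.
  unfold Lab, phN. destruct (rph (proj1_sig n)); try discriminate; [|eauto].
  destruct (excluded_middle_informative (okT (dN n) (pN n))); [|discriminate].
  destruct (excluded_middle_informative (okS (dN n) (pN n))); [|discriminate]. auto.
Qed.

Lemma base_valid (n : Node) ph : valid (mkraw (pN n) (dN n) ph) <->
  match ph with PhII => True | PhI _ => okT (dN n) (pN n) /\ okS (dN n) (pN n)
  | _ => okT (dN n) (pN n) /\ ~ okS (dN n) (pN n) end.
Proof.
  destruct (proj2_sig n) as (V1&V2&_). split; [intros (_&_&h); exact h|intros h; split; [|split]; auto].
Qed.

Lemma imm_of_PhII (n s : Node) : phN n = PhII -> okT (dN n) (pN n) -> okS (dN n) (pN n) -> imm_succ tlt n s ->
  exists m, proj1_sig s = mkraw (pN n) (dN n) (PhI m).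
Proof.
  intros E hT hS [H Hn]. destruct H as [(h1&h2&h3)|(h1&h2&h3)]; fold (pN n) (pN s) (dN n) (dN s) (phN n) (phN s) in *.
  - exfalso. assert (Vu : valid (mkraw (pN n) (dN n) (PhI (fst (dN s (pN n)))))) by (apply base_valid; auto).
    apply Hn. exists (exist _ _ Vu). split.
    + right; simpl; split; auto; split; auto. fold (phN n); rewrite E; simpl; auto.
    + left; simpl; split; auto.
  - destruct (proj2_sig s) as (_&_&V3). fold (pN s) (dN s) (phN s) in V3. rewrite E in h3.
    destruct (phN s) eqn:Es; simpl in h3; try tauto.
    + exists m. apply raw_eq; simpl; [symmetry; exact h1|symmetry; exact h2|exact Es].
    + exfalso; rewrite <- h1, <- h2 in V3; tauto.
    + exfalso; rewrite <- h1, <- h2 in V3; tauto.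
Qed.

Lemma imm_of_PhG (n s : Node) g : phN n = PhG g -> tlt n s -> exists w, proj1_sig s = mkraw (pN n) (dN n) (PhW g w).
Proof.
  intros E H. destruct H as [(h1&h2&h3)|(h1&h2&h3)]; fold (pN n) (pN s) (dN n) (dN s) (phN n) (phN s) in *;
  rewrite E in h3; simpl in h3; [tauto|].
  destruct (phN s) eqn:Es; simpl in h3; try tauto. subst. exists w. apply raw_eq; simpl; [symmetry; exact h1|symmetry; exact h2|exact Es].
Qed.

Lemma strat_II a b c : strategyII tlt Lab (strat a b c).
Proof.
  intros n HL. destruct (Lab_union n HL) as [(E&hT&hS)|[g E]]; unfold strat; fold (phN n); rewrite E.
  - assert (V : valid (mkraw (pN n) (dN n) (PhI (a (pN n), b (pN n), c (pN n))))) by (apply base_valid; auto).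
    apply imm_same; unfold pN, dN, phN; rewrite mknode_eq; auto; fold (phN n); rewrite E; simpl; auto.
    intros ph h1 h2; destruct ph; simpl in *; tauto.
  - destruct (proj2_sig n) as (_&_&V3). fold (pN n) (dN n) (phN n) in V3; rewrite E in V3.
    assert (V : valid (mkraw (pN n) (dN n) (PhW g (a g)))) by (apply base_valid; auto).
    apply imm_same; unfold pN, dN, phN; rewrite mknode_eq; auto; fold (phN n); rewrite E; simpl; auto.
    intros ph h1 h2; destruct ph; simpl in *; tauto.
Qed.

Lemma ntle_phc (s n : Node) : ntle s n -> lt (pN s) (pN n) -> phc (phN s) (dN n (pN s)).
Proof.
  intros [<-|[(h1&h2&h3)|(h1&h2&h3)]] hl; auto.
  - exfalso; eapply (lt_irrefl Hreg); eauto.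
  - exfalso; unfold pN in hl; rewrite h1 in hl; eapply (lt_irrefl Hreg); eauto.
Qed.

Lemma restr_union (n : Node) x hx : Lab (restr n x hx) = LUnion.
Proof.
  destruct (rrestr_alive _ _ (proj2_sig n) hx) as [h1 h2]. unfold Lab; simpl.
  destruct (excluded_middle_informative _) as [_|c]; [|tauto].
  destruct (excluded_middle_informative _) as [_|c]; [|tauto]. auto.
Qed.

Lemma strat_cons a b c (n : Node) : consistent tlt Lab (strat a b c) n ->
  (forall x, lt x (pN n) -> fst (dN n x) = (a x, b x, c x)) /\ (forall g w, phN n = PhW g w -> w = a g).
Proof.
  intros Hc. split.
  - intros x hx. set (r := restr n x hx).
    assert (Hr : ntle (strat a b c r) n) by (apply Hc; [apply rrestr_lt; auto|apply restr_union]).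
    destruct (rrestr_alive _ _ (proj2_sig n) hx) as [hT hS].
    assert (V : valid (mkraw x (dN r) (PhI (a x, b x, c x)))).
    { split; [|split]; simpl; auto; apply (proj2_sig r). }
    assert (E : proj1_sig (strat a b c r) = mkraw x (dN r) (PhI (a x, b x, c x))).
    { unfold strat; simpl. apply mknode_eq; auto. }
    apply ntle_phc in Hr; unfold pN, phN in *; rewrite E in *; simpl in *; auto.
  - intros g w E. destruct (proj2_sig n) as (_&_&V3). fold (pN n) (dN n) (phN n) in V3; rewrite E in V3.
    assert (Vr : valid (mkraw (pN n) (dN n) (PhG g))) by (apply base_valid; auto).
    set (r := exist _ _ Vr : Node).
    assert (Hr : ntle (strat a b c r) n).
    { apply Hc; [right; simpl; split; auto; split; auto; fold (phN n); rewrite E; simpl; auto|unfold Lab; simpl; auto]. }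
    assert (V : valid (mkraw (pN n) (dN n) (PhW g (a g)))) by (apply base_valid; auto).
    assert (E2 : proj1_sig (strat a b c r) = mkraw (pN n) (dN n) (PhW g (a g))).
    { unfold strat; simpl. apply mknode_eq; auto. }
    destruct Hr as [Hr|[(h1&_)|(_&_&h3)]].
    + apply (f_equal (@proj1_sig _ _)) in Hr. rewrite E2 in Hr.
      assert (E3 : phN n = PhW g (a g)) by (unfold phN; rewrite <- Hr; reflexivity). rewrite E in E3. congruence.
    + rewrite E2 in h1; simpl in h1; exfalso; eapply (lt_irrefl Hreg); eauto.
    + rewrite E2 in h3; simpl in h3; tauto.
Qed.

Lemma strat_wins a b c : C1 a b c -> winningII tlt Lab a (strat a b c).
Proof.
  intros HC. split; [apply strat_II|]. intros n Hl Hc.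
  destruct (strat_cons a b c n Hc) as [D1 D2].
  destruct (leaf_Lab n Hl) as [U [EU _]]. rewrite EU. simpl.
  unfold Lab in EU. destruct (rph (proj1_sig n)) eqn:Eph; try discriminate.
  - destruct (excluded_middle_informative (okT (dN n) (pN n))) as [h|h].
    + destruct (excluded_middle_informative _); discriminate.
    + exfalso; apply h. exists a, b, c; split; auto.
  - injection EU; intros <-. split; [symmetry; apply D2; auto|].
    intros hg. rewrite (D2 g w Eph). unfold s_of. rewrite D1; auto.
Qed.

Section Play.
Variable sig : Node -> Node.
Hypothesis Hsig : strategyII tlt Lab sig.
Variable If : K -> K * K.
Variable gch : K -> (K -> Round) -> K.

Definition Icons (n : Node) : Prop :=
  (forall x, lt x (pN n) -> snd (dN n x) = If x) /\
  match phN n with PhG g => g = gch (pN n) (dN n) | PhW g _ => g = gch (pN n) (dN n) | _ => True end.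

Definition GP (n : Node) : Prop := consistent tlt Lab sig n /\ Icons n.

Lemma cons_step (n n' : Node) : consistent tlt Lab sig n -> imm_succ tlt n n' -> (Lab n = LUnion -> sig n = n') ->
  consistent tlt Lab sig n'.
Proof.
  intros Hc [Hi Hn] Hs s Hsn HL. destruct (pred_comparable n' s n Hsn Hi) as [h|[h|h]].
  - eapply tle_trans; [apply Hc; auto|right; auto].
  - subst s. rewrite Hs; auto. left; auto.
  - exfalso; apply Hn; eauto.
Qed.

Lemma base_node_lt (n : Node) ph (V : valid (mkraw (pN n) (dN n) ph)) : phlt ph (phN n) -> tlt (exist _ _ V) n.
Proof. intros h; right; simpl; auto. Qed.

Lemma GP_data : forall x n1 n2, GP n1 -> GP n2 -> lt x (pN n1) -> lt x (pN n2) -> dN n1 x = dN n2 x.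
Proof.
  intros x; induction x as [x IH] using (well_founded_ind (lt_wf Hreg)).
  intros n1 n2 [c1 i1] [c2 i2] h1 h2.
  assert (Er : restr n1 x h1 = restr n2 x h2).
  { apply node_eq; simpl; apply raw_eq; simpl; auto. apply functional_extensionality; intros z.
    destruct (excluded_middle_informative (lt z x)) as [hz|]; auto.
    apply IH; [exact hz|split; auto|split; auto| |]; eapply (lt_trans Hreg); eauto. }
  set (r := restr n1 x h1).
  assert (R1 : ntle (sig r) n1) by (apply c1; [apply rrestr_lt; auto|apply restr_union]).
  assert (R2 : ntle (sig r) n2) by (unfold r; rewrite Er; apply c2; [apply rrestr_lt; auto|apply restr_union]).
  destruct (rrestr_alive _ _ (proj2_sig n1) h1) as [hT hS].
  destruct (imm_of_PhII r (sig r) eq_refl hT hS (Hsig r (restr_union n1 x h1))) as [m Em].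
  change (pN r) with x in Em.
  apply ntle_phc in R1; [|unfold pN; rewrite Em; auto]. apply ntle_phc in R2; [|unfold pN; rewrite Em; auto].
  unfold phN, pN in R1, R2; rewrite Em in R1, R2; simpl in R1, R2.
  rewrite (surjective_pairing (dN n1 x)), (surjective_pairing (dN n2 x)). f_equal; [congruence|].
  destruct i1 as [j1 _]; destruct i2 as [j2 _]. rewrite j1, j2; auto.
Qed.

Lemma GP_PhI (n : Node) m (b : Node) : GP n -> phN n = PhI m -> proj1_sig b = mkraw (pN n) (dN n) PhII ->
  Lab b = LUnion /\ tlt b n /\ proj1_sig (sig b) = mkraw (pN n) (dN n) (PhI m).
Proof.
  intros [c i] E Eb. destruct (proj2_sig n) as (_&_&V3). fold (pN n) (dN n) (phN n) in V3; rewrite E in V3.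
  assert (Lb : Lab b = LUnion).
  { unfold Lab; rewrite Eb; fold (pN b) (dN b). simpl. unfold pN, dN; rewrite Eb; simpl.
    destruct (excluded_middle_informative _); [|tauto]. destruct (excluded_middle_informative _); [|tauto]; auto. }
  assert (Hlt : tlt b n) by (right; rewrite Eb; simpl; split; auto; split; auto; fold (phN n); rewrite E; simpl; auto).
  split; auto; split; auto.
  assert (Eb2 : phN b = PhII) by (unfold phN; rewrite Eb; auto).
  assert (hT : okT (dN b) (pN b)) by (unfold dN, pN; rewrite Eb; simpl; tauto).
  assert (hS : okS (dN b) (pN b)) by (unfold dN, pN; rewrite Eb; simpl; tauto).
  destruct (imm_of_PhII b (sig b) Eb2 hT hS (Hsig b Lb)) as [m' Em'].
  assert (Hb : ntle (sig b) n) by (apply c; auto).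
  assert (Ep : pN b = pN n) by (unfold pN; rewrite Eb; auto).
  assert (Ed : dN b = dN n) by (unfold dN; rewrite Eb; auto).
  rewrite Em', Ep, Ed. rewrite Ep, Ed in Em'. destruct Hb as [Hb|[(h1&_)|(_&_&h3)]].
  - rewrite Hb in Em'. assert (E3 : phN n = PhI m') by (unfold phN; rewrite Em'; reflexivity).
    rewrite E in E3. injection E3 as ->. reflexivity.
  - rewrite Em' in h1; simpl in h1; exfalso; eapply (lt_irrefl Hreg); eauto.
  - rewrite Em' in h3; simpl in h3; tauto.
Qed.

Lemma GP_lt (n1 n2 : Node) : GP n1 -> GP n2 -> lt (pN n1) (pN n2) -> ntle n1 n2.
Proof.
  intros g1 g2 hl. right; left. split; auto. split.
  - intros x hx. apply GP_data; auto. eapply (lt_trans Hreg); eauto.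
  - fold (phN n1). destruct (phN n1) eqn:E; simpl; auto.
    + destruct (proj2_sig n1) as (V1&V2&V3). fold (pN n1) (dN n1) (phN n1) in V1, V2, V3; rewrite E in V3.
      assert (V : valid (mkraw (pN n1) (dN n1) PhII)) by (split; [|split]; simpl; auto).
      pose (b := exist _ _ V : Node).
      destruct (GP_PhI n1 m b g1 E eq_refl) as (Lb&_&EV).
      assert (Hb : ntle (sig b) n2).
      { apply (proj1 g2); auto. left; simpl; split; auto. split; auto.
        intros x hx; apply GP_data; auto. eapply (lt_trans Hreg); eauto. }
      assert (Hp : lt (pN (sig b)) (pN n2)) by (unfold pN; rewrite EV; simpl; exact hl).
      pose proof (ntle_phc _ _ Hb Hp) as Q. unfold phN, pN in Q; rewrite EV in Q; simpl in Q. exact Q.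
    + destruct (proj2_sig n1) as (_&_&V3). fold (pN n1) (dN n1) (phN n1) in V3; rewrite E in V3.
      destruct (proj2_sig n2) as (_&W2&_). destruct (W2 _ hl) as [_ hS]. apply (proj2 V3).
      eapply okS_ext; [|exact hS]. intros x hx; symmetry; apply GP_data; auto. eapply (lt_trans Hreg); eauto.
    + destruct (proj2_sig n1) as (_&_&V3). fold (pN n1) (dN n1) (phN n1) in V3; rewrite E in V3.
      destruct (proj2_sig n2) as (_&W2&_). destruct (W2 _ hl) as [_ hS]. apply (proj2 V3).
      eapply okS_ext; [|exact hS]. intros x hx; symmetry; apply GP_data; auto. eapply (lt_trans Hreg); eauto.
Qed.

Lemma GP_PhW (n : Node) g w (b : Node) : GP n -> phN n = PhW g w -> proj1_sig b = mkraw (pN n) (dN n) (PhG g) ->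
  Lab b = LUnion /\ tlt b n /\ proj1_sig (sig b) = mkraw (pN n) (dN n) (PhW g w).
Proof.
  intros [c i] E Eb.
  assert (Lb : Lab b = LUnion) by (unfold Lab; rewrite Eb; auto).
  assert (Hlt : tlt b n) by (right; rewrite Eb; simpl; split; auto; split; auto; fold (phN n); rewrite E; simpl; auto).
  split; auto; split; auto.
  assert (Eb2 : phN b = PhG g) by (unfold phN; rewrite Eb; auto).
  assert (Hb : ntle (sig b) n) by (apply c; auto).
  destruct (imm_of_PhG b (sig b) g Eb2 (proj1 (Hsig b Lb))) as [w' Ew].
  assert (Ep : pN b = pN n) by (unfold pN; rewrite Eb; auto).
  assert (Ed : dN b = dN n) by (unfold dN; rewrite Eb; auto).
  rewrite Ew, Ep, Ed. rewrite Ep, Ed in Ew. destruct Hb as [Hb|[(h1&_)|(_&_&h3)]].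
  - rewrite Hb in Ew. assert (E3 : phN n = PhW g w') by (unfold phN; rewrite Ew; reflexivity).
    rewrite E in E3. injection E3 as ->. reflexivity.
  - rewrite Ew in h1; simpl in h1; exfalso; eapply (lt_irrefl Hreg); eauto.
  - rewrite Ew in h3; simpl in h3; tauto.
Qed.

Lemma GP_gch (n : Node) g : GP n -> (phN n = PhG g \/ exists w, phN n = PhW g w) -> g = gch (pN n) (dN n).
Proof. intros [_ [_ i]] [E|[w E]]; rewrite E in i; auto. Qed.

Lemma GP_eq (n1 n2 : Node) : GP n1 -> GP n2 -> pN n1 = pN n2 -> ntle n1 n2 \/ ntle n2 n1.
Proof.
  intros g1 g2 hp.
  assert (hd : dN n1 = dN n2).
  { apply data_eq_canon; try apply proj2_sig; auto. intros x hx; apply GP_data; auto. unfold pN in *; rewrite <- hp; auto. }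
  assert (Hr : phN n1 = phN n2 -> n1 = n2).
  { intros e3. apply node_eq, raw_eq; auto. }
  assert (Hlt : phlt (phN n1) (phN n2) -> tlt n1 n2) by (intros h; right; auto).
  assert (Hlt' : phlt (phN n2) (phN n1) -> tlt n2 n1) by (intros h; right; auto).
  destruct (proj2_sig n1) as (W1&U1&V1). destruct (proj2_sig n2) as (W2&U2&V2).
  fold (pN n1) (dN n1) (phN n1) in W1, U1, V1. fold (pN n2) (dN n2) (phN n2) in W2, U2, V2.
  destruct (phN n1) eqn:E1, (phN n2) eqn:E2;
  try (left; left; apply Hr; auto; fail);
  try (left; right; apply Hlt; simpl; auto; fail);
  try (right; right; apply Hlt'; simpl; auto; fail);
  try (exfalso; rewrite hp, hd in V1; tauto).
  - assert (Vb : valid (mkraw (pN n1) (dN n1) PhII)) by (split; [|split]; simpl; auto).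
    pose (b := exist _ _ Vb : Node).
    destruct (GP_PhI n1 m b g1 E1 eq_refl) as (_&_&Q1).
    destruct (GP_PhI n2 m0 b g2 E2) as (_&_&Q2); [simpl; rewrite hp, hd; auto|].
    rewrite Q1 in Q2. injection Q2 as Q2. subst. left; left; apply Hr; auto.
  - assert (g = g0) by (rewrite (GP_gch n1 g g1), (GP_gch n2 g0 g2); auto; congruence).
    subst; left; left; apply Hr; auto.
  - assert (g = g0) by (rewrite (GP_gch n1 g g1), (GP_gch n2 g0 g2); eauto; congruence).
    left; right; apply Hlt; simpl; auto.
  - assert (g = g0) by (rewrite (GP_gch n1 g g1), (GP_gch n2 g0 g2); eauto; congruence).
    right; right; apply Hlt'; simpl; auto.
  - assert (g = g0) by (rewrite (GP_gch n1 g g1), (GP_gch n2 g0 g2); eauto; congruence). subst g0.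
    assert (Vb : valid (mkraw (pN n1) (dN n1) (PhG g))) by (split; [|split]; simpl; auto).
    pose (b := exist _ _ Vb : Node).
    destruct (GP_PhW n1 g w b g1 E1 eq_refl) as (_&_&Q1).
    destruct (GP_PhW n2 g w0 b g2 E2) as (_&_&Q2); [simpl; rewrite hp, hd; auto|].
    rewrite Q1 in Q2. injection Q2 as Q2. subst. left; left; apply Hr; auto.
Qed.

Lemma GP_chain : chainG GP.
Proof.
  intros n1 n2 g1 g2. destruct (lt_trich Hreg (pN n1) (pN n2)) as [h|[h|h]].
  - left; apply GP_lt; auto.
  - apply GP_eq; auto.
  - right; apply GP_lt; auto.
Qed.

Lemma imm_next (n : Node) m i (V : valid (rnext (proj1_sig n) (m, i))) : phN n = PhI m -> imm_succ tlt n (exist _ _ V).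
Proof.
  intros E. split; [apply rnext_lt; auto|].
  intros [u [H1 H2]]. destruct H1 as [(a1&a2&a3)|(a1&a2&a3)]; destruct H2 as [(b1&b2&b3)|(b1&b2&b3)]; simpl in *.
  - apply lt_succK in b1. eapply (le_not_lt Hreg); eauto.
  - destruct (rph (proj1_sig u)); simpl in b3; tauto.
  - fold (phN n) in a3; rewrite E in a3; simpl in a3; tauto.
  - fold (phN n) in a3; rewrite E in a3; simpl in a3; tauto.
Qed.

Lemma GP_succ (n : Node) : GP n -> ~ leaf tlt n -> exists n', GP n' /\ tlt n n'.
Proof.
  intros [c [i1 i2]] Hl. destruct (proj2_sig n) as (W1&U1&V1). fold (pN n) (dN n) (phN n) in W1, U1, V1, i2.
  destruct (phN n) eqn:E.
  - destruct (classic (okT (dN n) (pN n))) as [hT|hT];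
      [|exfalso; apply Hl; apply (Lab_leaf n (fun _ => False)); unfold Lab; fold (phN n); rewrite E;
        destruct (excluded_middle_informative _); tauto].
    destruct (classic (okS (dN n) (pN n))) as [hS|hS].
    + assert (Lu : Lab n = LUnion).
      { unfold Lab; fold (phN n); rewrite E. destruct (excluded_middle_informative _); [|tauto].
        destruct (excluded_middle_informative _); tauto. }
      pose proof (Hsig n Lu) as Hi. destruct (imm_of_PhII n (sig n) E hT hS Hi) as [m Em].
      exists (sig n); split; [|apply Hi]. split; [apply (cons_step n); auto|].
      unfold Icons, pN, dN, phN; rewrite Em; simpl. split; auto.
    + assert (Vs : valid (mkraw (pN n) (dN n) (PhG (gch (pN n) (dN n))))) by (split; [|split]; simpl; auto).
      pose (s := exist _ _ Vs : Node).
      assert (Hi : imm_succ tlt n s).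
      { apply imm_same; auto; unfold phN; simpl; fold (phN n); rewrite E; simpl; auto. intros ph h1 h2; destruct ph; simpl in *; tauto. }
      exists s; split; [|apply Hi]. split.
      * apply (cons_step n); auto. intros HL; exfalso. unfold Lab in HL; fold (phN n) in HL; rewrite E in HL.
        destruct (excluded_middle_informative _); [|discriminate]. destruct (excluded_middle_informative _); [tauto|discriminate].
      * unfold Icons; simpl. split; auto.
  - pose proof (rnext_valid (proj1_sig n) m (If (pN n)) (proj2_sig n) E) as Vs.
    pose (s := exist _ _ Vs : Node).
    assert (Hi : imm_succ tlt n s) by (apply imm_next; auto).
    exists s; split; [|apply Hi]. split.
    + apply (cons_step n); auto. intros HL; unfold Lab in HL; fold (phN n) in HL; rewrite E in HL; discriminate.
    + unfold Icons, dN, pN, phN; simpl. split; auto. intros x hx. apply lt_succK in hx.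
      destruct (excluded_middle_informative (lt x (rp (proj1_sig n)))) as [h|h]; [apply i1; auto|].
      destruct (excluded_middle_informative (x = rp (proj1_sig n))) as [h'|h']; [subst x; reflexivity|].
      exfalso; destruct hx as [hx|hx]; [apply h; exact hx|apply h'; exact hx].
  - assert (Lu : Lab n = LUnion) by (unfold Lab; fold (phN n); rewrite E; auto).
    pose proof (Hsig n Lu) as Hi. destruct (imm_of_PhG n (sig n) g E (proj1 Hi)) as [w Ew].
    exists (sig n); split; [|apply Hi]. split; [apply (cons_step n); auto|].
    unfold Icons, pN, dN, phN; rewrite Ew; simpl. split; auto.
  - exfalso; apply Hl; apply (Lab_leaf n (fun xi => xi g = w /\ (lt g (pN n) -> w = s_of (dN n g)))).
    unfold Lab; fold (phN n); rewrite E; auto.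
Qed.

Lemma play : exists n, leaf tlt n /\ consistent tlt Lab sig n /\ Icons n.
Proof.
  apply NNPP; intros Hn.
  assert (HL : forall n, GP n -> ~ leaf tlt n) by (intros n [c i] l; apply Hn; eauto).
  destruct (chain_sup GP GP_chain) as [(n0&g0&hmax)|(t&h1&h2&h3&h4&h5)].
  - destruct (GP_succ n0 g0 (HL n0 g0)) as [n' [g' hl]].
    apply (tlt_irrefl n0). eapply tlt_tle_trans; eauto.
  - assert (Gt : GP t).
    { split.
      - intros s hs HLs. destruct (h3 s hs) as [n [gn hn]]. eapply tle_trans; [apply (proj1 gn); auto|right; apply h1; auto].
      - split; [|rewrite h5; auto]. intros x hx. destruct (h4 x hx) as [n [gn [hxn E]]]. rewrite E. apply (proj2 gn); auto. }
    destruct (GP_succ t Gt (HL t Gt)) as [n' [g' hl]].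
    apply (tlt_irrefl t). eapply tlt_trans; eauto.
Qed.

End Play.


Hypothesis Hcov : forall xi, (exists b c, C1 xi b c) \/ (exists b c, C2 xi b c).

Lemma wins_iff xi : (exists b c, C1 xi b c) <-> II_wins tlt Lab xi.
Proof.
  split.
  - intros (b&c&H). exists (strat xi b c). apply strat_wins; auto.
  - intros [sg [Hs Hw]]. destruct (Hcov xi) as [H|(b'&c'&H2)]; auto. exfalso.
    set (gch := fun (p : K) (d : K -> Round) => epsilon (K_inh Hreg) (fun g => lt g p /\ s_of (d g) <> xi g)).
    destruct (play sg Hs (fun x => (b' x, c' x)) gch) as (n&hl&hc&[i1 i2]).
    pose proof (Hw n hl hc) as Hh. destruct (leaf_Lab n hl) as [U [EU _]]. rewrite EU in Hh; simpl in Hh.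
    destruct (proj2_sig n) as (_&_&V3). fold (pN n) (dN n) (phN n) in V3.
    unfold Lab in EU. fold (phN n) in EU. destruct (phN n) eqn:Eph; try discriminate.
    + destruct (excluded_middle_informative (okT (dN n) (pN n))).
      * destruct (excluded_middle_informative (okS (dN n) (pN n))); discriminate.
      * injection EU; intros <-; exact Hh.
    + injection EU; intros <-. destruct Hh as [h1 h2].
      assert (Hex : exists g0, lt g0 (pN n) /\ s_of (dN n g0) <> xi g0).
      { apply NNPP; intros Hn. apply (proj2 V3). exists xi, b', c'; split; auto. intros x hx. split.
        - apply NNPP; intros h; apply Hn; eauto.
        - rewrite i1; auto. }
      pose proof (epsilon_spec (K_inh Hreg) (fun g => lt g (pN n) /\ s_of (dN n g) <> xi g) Hex) as Hg.
      fold (gch (pN n) (dN n)) in Hg. rewrite <- i2 in Hg. destruct Hg as [g1 g2].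
      apply g2. rewrite h1. symmetry; apply h2; auto.
Qed.

Definition pi_ (i : nat) (eta : @Baire K) : @Baire K := fun x => eta (pr (k_ i) x).
Definition Dset (eta : @Baire K) : Prop := C1 (pi_ 0 eta) (pi_ 1 eta) (pi_ 2 eta).
Definition piS (eta : @Baire K) : Node -> Node := strat (pi_ 0 eta) (pi_ 1 eta) (pi_ 2 eta).

Lemma win_pi xi eta : Dset eta -> (winningII tlt Lab xi (piS eta) <-> xi = pi_ 0 eta).
Proof.
  intros HD. split.
  - intros [Hs Hw]. apply NNPP; intros hne.
    assert (Hg : exists g0, xi g0 <> pi_ 0 eta g0).
    { apply NNPP; intros Hn; apply hne. apply functional_extensionality; intros x. apply NNPP; intros h; apply Hn; eauto. }
    destruct Hg as [g0 hg0].
    destruct (play (piS eta) Hs (fun _ => (kz, kz)) (fun _ _ => g0)) as (n&hl&hc&[i1 i2]).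
    pose proof (Hw n hl hc) as Hh. destruct (leaf_Lab n hl) as [U [EU _]]. rewrite EU in Hh; simpl in Hh.
    destruct (strat_cons _ _ _ n hc) as [D1 D2].
    unfold Lab in EU. fold (phN n) in EU, i2. destruct (phN n) eqn:Eph; try discriminate.
    + destruct (excluded_middle_informative (okT (dN n) (pN n))) as [h|h].
      * destruct (excluded_middle_informative (okS (dN n) (pN n))); discriminate.
      * apply h. exists (pi_ 0 eta), (pi_ 1 eta), (pi_ 2 eta); split; auto.
    + injection EU; intros <-. destruct Hh as [h1 h2]. subst g. apply hg0. rewrite h1. apply D2; auto.
  - intros ->. apply strat_wins; auto.
Qed.

Lemma pr_k_inj i : injective (pr (k_ i)).
Proof. intros x y E; apply pr_inj in E; tauto. Qed.

Lemma Dopen : exists F : K -> (@Baire K -> Prop), (forall k, basic1 (F k)) /\ forall eta, ~ Dset eta <-> exists k, F k eta.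
Proof.
  destruct HC1 as (F&hF&E).
  exists (fun k eta => F k (pi_ 0 eta) (pi_ 1 eta) (pi_ 2 eta)). split.
  - intros k. destruct (hF k) as (U&V&W&hU&hV&hW&EF).
    eapply basic1_ext; [apply (basic1_inter Hreg); [apply (basic1_pull Hreg _ _ (pr_k_inj 0) hU)|
                         apply (basic1_inter Hreg); [apply (basic1_pull Hreg _ _ (pr_k_inj 1) hV)|apply (basic1_pull Hreg _ _ (pr_k_inj 2) hW)]]|].
    intros z. rewrite EF. unfold pi_. tauto.
  - intros eta. unfold Dset. apply E.
Qed.

Lemma D_closed : kclosed1 Dset.
Proof.
  destruct Dopen as (F&hF&E). exists K, F. split; [apply card_le_K|]. split; auto.
Qed.

Lemma code_borel : @kBorel K _ basic2 (fun p : @Baire K * @Baire K => Dset (snd p) /\ winningII tlt Lab (fst p) (piS (snd p))).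
Proof.
  destruct Dopen as (F&hF&E).
  assert (BD : @kBorel K _ basic2 (fun p : @Baire K * @Baire K => Dset (snd p))).
  { eapply kB_ext; [apply kB_compl; apply (@kB_union K _ basic2 K (fun k p => F k (snd p))); [apply card_le_K|]|].
    - intros k. apply kB_basic. exists (fun _ => True), (F k). split; [apply (basic1_full Hreg)|split; auto].
      intros; simpl; tauto.
    - intros p. simpl. rewrite <- E. split; [apply NNPP|tauto]. }
  assert (BE : @kBorel K _ basic2 (fun p : @Baire K * @Baire K => fst p = pi_ 0 (snd p))).
  { eapply kB_ext; [apply (@kB_inter K _ basic2 K (fun x p => exists v, fst p x = v /\ snd p (pr (k_ 0) x) = v)); [apply card_le_K|]|].
    - intros x. apply (@kB_union K _ basic2 K (fun v p => fst p x = v /\ snd p (pr (k_ 0) x) = v)); [apply card_le_K|].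
      intros v. apply kB_basic. exists (fun z => z x = v), (fun z => z (pr (k_ 0) x) = v).
      split; [apply (basic1_single Hreg)|split; [apply (basic1_single Hreg)|]]; auto. intros; tauto.
    - intros p. split.
      + intros H. apply functional_extensionality; intros x. destruct (H x) as [v [h1 h2]]. unfold pi_. congruence.
      + intros H x. exists (fst p x); split; auto. rewrite H; auto. }
  eapply kB_ext; [apply (@kB_inter K _ basic2 bool (fun bb p => if bb then Dset (snd p) else fst p = pi_ 0 (snd p))); [apply (card_le_bool Hreg)|]|].
  - intros [|]; auto.
  - intros p. split.
    + intros H. pose proof (H true) as H1; pose proof (H false) as H2; simpl in *. split; auto.
      apply win_pi; auto.
    + intros [H1 H2] [|]; auto. apply win_pi; auto.
Qed.

Lemma code_ii xi : II_wins tlt Lab xi -> exists eta, Dset eta /\ winningII tlt Lab xi (piS eta).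
Proof.
  intros H. apply wins_iff in H. destruct H as (b&c&H).
  destruct (glue2 Hreg (fun k x => if excluded_middle_informative (k = k_ 0) then xi x
                        else if excluded_middle_informative (k = k_ 1) then b x else c x)) as [eta Heta].
  assert (E0 : pi_ 0 eta = xi).
  { apply functional_extensionality; intros x; unfold pi_. rewrite Heta.
    destruct (excluded_middle_informative (k_ 0 = k_ 0)); tauto. }
  assert (E1 : pi_ 1 eta = b).
  { apply functional_extensionality; intros x; unfold pi_. rewrite Heta.
    destruct (excluded_middle_informative (k_ 1 = k_ 0)) as [h|_]; [exfalso; eapply k_neq; [|exact h]; discriminate|].
    destruct (excluded_middle_informative (k_ 1 = k_ 1)); tauto. }
  assert (E2 : pi_ 2 eta = c).
  { apply functional_extensionality; intros x; unfold pi_. rewrite Heta.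
    destruct (excluded_middle_informative (k_ 2 = k_ 0)) as [h|_]; [exfalso; eapply k_neq; [|exact h]; discriminate|].
    destruct (excluded_middle_informative (k_ 2 = k_ 1)) as [h|_]; [exfalso; eapply k_neq; [|exact h]; discriminate|].
    auto. }
  exists eta. unfold Dset, piS. rewrite E0, E1, E2. split; auto. apply strat_wins; auto.
Qed.

Lemma main_code : borel_star_code lt tlt root Lab (KltK lt).
Proof.
  split; [apply good|]. exists Dset, piS. split; [apply D_closed|]. split; [intros; apply strat_II|].
  split; [apply code_ii|]. apply code_borel.
Qed.

End Tree.

Theorem lemma3p15 (K : Type) (lt : K -> K -> Prop) :
  regular_cardinal lt ->
  forall X : @Baire K -> Prop,
    Delta11 X -> borel_star lt (KltK lt) X.
Proof.
  intros Hreg X [HS HP].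
  destruct (sigma11_NF Hreg X HS) as (C1&hC1&E1).
  destruct (sigma11_NF Hreg _ HP) as (C2&hC2&E2).
  assert (Hdisj : forall a b c b' c', C1 a b c -> C2 a b' c' -> False).
  { intros a b c b' c' h1 h2. apply (proj2 (E2 a)); [eauto|]. apply E1; eauto. }
  assert (Hcov : forall xi, (exists b c, C1 xi b c) \/ (exists b c, C2 xi b c)).
  { intros xi. destruct (classic (X xi)) as [h|h]; [left; apply E1|right; apply E2]; auto. }
  exists (Node Hreg C1 C2), (tlt Hreg C1 C2), (root Hreg C1 C2), (Lab Hreg C1 C2).
  split.
  - apply main_code; auto.
  - intros xi. rewrite E1. apply wins_iff; auto.
Qed.
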